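(* For every $2n_1\in\{18,20\}$, $2n_2\in\{22,24,26\}$, $2n_3\in\{28,30\}$ and every integer $s\ge1$, there exist ternary Euclidean formally self-dual LCD codes with parameters $[4sn_1,2sn_1,6]_3$, $[4sn_2,2sn_2,7]_3$ and $[4sn_3,2sn_3,8]_3$. In addition, a ternary Euclidean formally self-dual LCD $[32s,16s,5]_3$ code exists for every integer $s\ge1$.
   Context: A linear code $\mathcal{C}$ over $\mathbb{F}_3$ is Euclidean LCD if $\mathcal{C}\cap\mathcal{C}^{\perp_E}=\{0\}$, where $\perp_E$ is the dual with respect to $\sum_ix_iy_i$; it is Euclidean formally self-dual if it has the same weight distribution as $\mathcal{C}^{\perp_E}$. $[n,k,d]_3$ denotes length $n$, dimension $k$, minimum distance $d$. *)

(* Defs.v *)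
From HB Require Import structures.
From mathcomp Require Import all_boot all_order all_algebra.
Set Implicit Arguments. Unset Strict Implicit. Unset Printing Implicit Defensive.
Import GRing.Theory.
Local Open Scope ring_scope.

(* A ternary linear code of length n is a subspace of F_3^n (row vectors),
   represented as the row space of a square matrix G (mxalgebra convention). *)
Definition code (n : nat) := 'M['F_3]_n.

Definition in_code n (C : code n) (c : 'rV['F_3]_n) : bool := (c <= C)%MS.

(* Euclidean dual: all x with sum_i x_i y_i = 0 for every y in C,
   i.e. x *m C^T = 0; this is the row space of kermx C^T. *)
Definition edual n (C : code n) : code n := kermx C^T.

Definition wt n (c : 'rV['F_3]_n) : nat := #|[set i : 'I_n | c 0 i != 0]|.

Definition dim n (C : code n) : nat := \rank C.

Definition min_dist n (C : code n) (d : nat) : Prop :=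
  (exists2 c, in_code C c & (c != 0) && (wt c == d)) /\
  (forall c, in_code C c -> c != 0 -> (d <= wt c)%N).

Definition wdist n (C : code n) (w : nat) : nat :=
  #|[set c : 'rV['F_3]_n | in_code C c & wt c == w]|.

Definition is_LCD n (C : code n) : Prop := (C :&: edual C == (0 : 'M['F_3]_n))%MS.

Definition is_formally_self_dual n (C : code n) : Prop :=
  forall w, wdist C w = wdist (edual C) w.

Definition fsd_lcd_code n (C : code n) (k d : nat) : Prop :=
  [/\ is_LCD C, is_formally_self_dual C, dim C = k & min_dist C d].

(* Main.v *)
Require Import Defs.
From mathcomp Require Import all_boot all_order all_algebra.
From mathcomp Require Import zify.
Set Implicit Arguments. Unset Strict Implicit. Unset Printing Implicit Defensive.
Import GRing.Theory.

Fixpoint lacc (l : seq nat) (L : seq (seq nat)) (p : nat) : seq nat :=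
  match l, L with
  | v :: l', r :: L' =>
      let acc := lacc l' L' p in
      if v == 0 then acc else [seq ab.1 + v * ab.2 | ab <- zip acc r]
  | _, _ => nseq p 0
  end.

Definition nz (l : seq nat) : nat := count (fun v => v != 0) l.
Definition m3 (l : seq nat) : seq nat := [seq v %% 3 | v <- l].

Fixpoint lowwt (t n : nat) : seq (seq nat) :=
  match n with
  | 0 => [:: [::]]
  | n'.+1 => [seq 0 :: l | l <- lowwt t n'] ++
      match t with 0 => [::] | t'.+1 =>
        [seq 1 :: l | l <- lowwt t' n'] ++ [seq 2 :: l | l <- lowwt t' n'] end
  end.

Definition bw_ok (d p : nat) (L : seq (seq nat)) (l : seq nat) : bool :=
  all (fun v => v == 0) l || (d <= nz l + nz (m3 (lacc l L p))).

Definition check_lw (t d p : nat) (L : seq (seq nat)) : bool :=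
  all (bw_ok d p L) (lowwt t p).

Definition wf (p : nat) (L : seq (seq nat)) : bool :=
  (size L == p) && all (fun r => size r == p) L.

Definition ent (L : seq (seq nat)) i j := nth 0 (nth [::] L i) j.

Definition lmm p (L1 L2 : seq (seq nat)) := [seq lacc r L2 p | r <- L1].

Definition chkI p (Y Z : seq (seq nat)) : bool :=
  all (fun i => all (fun j => (ent Y i j + ent Z i j) %% 3 == (i == j)) (iota 0 p)) (iota 0 p).

Definition lsym p (L : seq (seq nat)) : bool :=
  all (fun i => all (fun j => ent L i j == ent L j i) (iota 0 p)) (iota 0 p).

Lemma lowwt_mem l t : all (fun v => v < 3) l -> nz l <= t -> l \in lowwt t (size l).
Proof.
elim: l t => [|v l IH] t /=; first by rewrite inE.
case/andP=> hv hl; rewrite /nz /= -/(nz l).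
case: v hv => [|[|[|v]]] // _ /=.
- by move=> h; rewrite mem_cat map_f // IH.
- case: t => // t h; rewrite mem_cat; apply/orP; right.
  by rewrite mem_cat map_f // IH.
- case: t => // t h; rewrite mem_cat; apply/orP; right.
  by rewrite mem_cat; apply/orP; right; rewrite map_f // IH.
Qed.

Lemma lacc_size l L p : size l <= size L ->
  (forall i, i < size l -> size (nth [::] L i) = p) -> size (lacc l L p) = p.
Proof.
elim: l L => [|v l IH] L /=; first by case: L => * /=; rewrite size_nseq.
case: L => [//|r L] /= hs hr; have IHs : size (lacc l L p) = p.
  by apply: IH => // i hi; exact: (hr i.+1).
case: eqP => // _; rewrite size_map size_zip IHs (hr 0) //; lia.
Qed.

Lemma lacc_nth l L p j : size l <= size L ->
  (forall i, i < size l -> size (nth [::] L i) = p) -> j < p ->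
  nth 0 (lacc l L p) j = \sum_(0 <= i < size l) nth 0 l i * ent L i j.
Proof.
elim: l L => [|v l IH] L /=.
  by case: L => * /=; rewrite big_geq // nth_nseq; case: ifP.
case: L => [//|r L] /= hs hr hj.
have hr' : forall i, i < size l -> size (nth [::] L i) = p.
  by move=> i hi; exact: (hr i.+1).
rewrite big_nat_recl //=.
under eq_bigr do rewrite /ent /=.
rewrite -/(\sum_(0 <= i < size l) nth 0 l i * ent L i j) -IH //.
case: eqP => [->|_]; first by rewrite mul0n.
have hsz : size (lacc l L p) = p by apply: lacc_size.
rewrite (nth_map (0, 0)); last by rewrite size_zip hsz (hr 0) //=; lia.
rewrite nth_zip /=; last by rewrite hsz (hr 0).
by rewrite /ent /= addnC.
Qed.

Local Open Scope ring_scope.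

Definition mx_of p (L : seq (seq nat)) : 'M['F_3]_p :=
  \matrix_(i, j) (ent L i j)%:R.

Definition vl p (x : 'rV['F_3]_p) : seq nat := [seq (x 0 i : nat) | i <- enum 'I_p].

Lemma F3v (a : 'F_3) : a = (a : nat)%:R.
Proof. have H := ltn_ord a. apply: val_inj. by rewrite /= val_Fp_nat // modn_small. Qed.

Lemma F3lt (a : 'F_3) : ((a : nat) < 3)%N.
Proof. exact: ltn_ord a. Qed.

Lemma F3nat n : ((n%:R : 'F_3) : nat) = (n %% 3)%N.
Proof. by rewrite val_Fp_nat. Qed.

Lemma F3eq0 (a : 'F_3) : (a != 0) = ((a : nat) != 0%N).
Proof. by rewrite -val_eqE. Qed.

Lemma wtC n (c : 'rV['F_3]_n) : wt c = count (fun i => c 0 i != 0) (enum 'I_n).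
Proof. by rewrite /wt cardsE cardE /enum_mem size_filter; rewrite (@eq_filter _ _ predT) ?filter_predT //. Qed.

Lemma wt_vl p (x : 'rV['F_3]_p) : wt x = nz (vl x).
Proof. rewrite wtC /nz /vl [RHS]count_map /enum_mem (@eq_filter _ _ predT) ?filter_predT //. Qed.

Lemma size_vl p (x : 'rV['F_3]_p) : size (vl x) = p.
Proof. by rewrite size_map size_enum_ord. Qed.

Lemma nth_vl p (x : 'rV['F_3]_p) (i : 'I_p) : nth 0%N (vl x) i = x 0 i.
Proof. by rewrite (nth_map i) ?size_enum_ord // nth_ord_enum. Qed.

Lemma vl_lt3 p (x : 'rV['F_3]_p) : all (fun v => v < 3)%N (vl x).
Proof. by apply/allP => v /mapP [i _ ->]; exact: F3lt. Qed.

Lemma vl_nz p (x : 'rV['F_3]_p) : x != 0 -> ~~ all (fun v => v == 0%N) (vl x).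
Proof.
move=> hx; apply/negP => /allP h; case/negP: hx; apply/eqP/matrixP => i j.
rewrite !mxE ord1; apply: val_inj => /=.
by apply/eqP/h; rewrite -(nth_vl x j) mem_nth // size_vl.
Qed.

Lemma wf_size p L : wf p L -> size L = p.
Proof. by case/andP => /eqP. Qed.
Lemma wf_row p L i : wf p L -> (i < p)%N -> size (nth [::] L i) = p.
Proof.
case/andP => /eqP hs /allP h hi; apply/eqP/h; rewrite mem_nth // hs //.
Qed.

Lemma vl_mul p L (x : 'rV['F_3]_p) : wf p L ->
  vl (x *m mx_of p L) = m3 (lacc (vl x) L p).
Proof.
move=> hw; have hs := wf_size hw.
have hsz : size (lacc (vl x) L p) = p.
  by apply: lacc_size; rewrite size_vl ?hs // => i hi; apply: wf_row.
apply: (@eq_from_nth _ 0%N); first by rewrite size_vl /m3 size_map hsz.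
move=> j; rewrite size_vl => hj.
have -> : j = Ordinal hj by [].
rewrite nth_vl (nth_map 0%N) ?hsz // lacc_nth ?size_vl ?hs //; last first.
  by move=> i hi; apply: wf_row.
rewrite !mxE big_mkord.
have -> : \sum_(i < p) x 0 i * mx_of p L i (Ordinal hj) =
   (\sum_(i < p) (nth 0%N (vl x) i * ent L i j)%N)%:R.
  rewrite natr_sum; apply: eq_bigr => i _.
  by rewrite natrM nth_vl -F3v /mx_of mxE.
by rewrite F3nat.
Qed.

Lemma mx_of_mul p L1 L2 : wf p L1 -> wf p L2 ->
  mx_of p L1 *m mx_of p L2 = mx_of p (lmm p L1 L2).
Proof.
move=> h1 h2; apply/matrixP => i j; rewrite !mxE.
rewrite /ent /lmm (nth_map [::]) ?(wf_size h1) //.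
rewrite lacc_nth ?(wf_size h2) ?(wf_row h1) // => [|k hk]; last first.
  by apply: wf_row; rewrite // -(wf_row h1 (ltn_ord i)).
rewrite big_mkord natr_sum; apply: eq_bigr => k _; by rewrite !mxE natrM.
Qed.

Lemma wf_lmm p L1 L2 : wf p L1 -> wf p L2 -> wf p (lmm p L1 L2).
Proof.
move=> h1 h2; apply/andP; split; first by rewrite size_map (wf_size h1).
apply/allP => r /mapP [r1 hr1 ->]; apply/eqP; apply: lacc_size.
  case/andP: h1 => _ /allP /(_ _ hr1) /eqP ->; by rewrite (wf_size h2).
move=> i hi; apply: wf_row => //.
by case/andP: h1 => _ /allP /(_ _ hr1) /eqP <-.
Qed.

Lemma chkI_mx p Y Z : chkI p Y Z -> mx_of p Y + mx_of p Z = 1%:M.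
Proof.
move=> /allP h; apply/matrixP => i j; rewrite !mxE -natrD -Fp_nat_mod //.
have := h i; rewrite mem_iota /= ltn_ord => /(_ isT) /allP h2.
by have := h2 j; rewrite mem_iota /= ltn_ord => /(_ isT) /eqP ->.
Qed.

Lemma lsym_mx p L : lsym p L -> (mx_of p L)^T = mx_of p L.
Proof.
move=> /allP h; apply/matrixP => i j; rewrite !mxE.
have := h j; rewrite mem_iota /= ltn_ord => /(_ isT) /allP h2.
by have := h2 i; rewrite mem_iota /= ltn_ord => /(_ isT) /eqP ->.
Qed.

Lemma wtE n (c : 'rV['F_3]_n) : wt c = (\sum_(i < n) (c ord0 i != 0%R))%N.
Proof.
rewrite /wt cardsE -sum1_card big_mkcond /=; apply: eq_bigr => i _.
by rewrite unfold_in; case: (c 0 i != 0).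
Qed.

Lemma wt_row_mx m n (a : 'rV['F_3]_m) (b : 'rV['F_3]_n) :
  wt (row_mx a b) = (wt a + wt b)%N.
Proof.
rewrite !wtE big_split_ord /=; congr (_ + _)%N; apply: eq_bigr => i _.
  by rewrite row_mxEl. by rewrite row_mxEr.
Qed.

Lemma wt_opp n (a : 'rV['F_3]_n) : wt (- a) = wt a.
Proof. by rewrite !wtE; apply: eq_bigr => i _; rewrite mxE oppr_eq0. Qed.

Lemma wt0 n : wt (0 : 'rV['F_3]_n) = 0%N.
Proof. by rewrite wtE big1 // => i _; rewrite mxE eqxx. Qed.

Lemma wt_eq0 n (a : 'rV['F_3]_n) : wt a = 0%N -> a = 0.
Proof.
rewrite wtE => /eqP; rewrite sum_nat_eq0 => /forallP h.
apply/matrixP => i j; rewrite ord1 mxE.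
by have := h j; case: (a 0 j =P 0).
Qed.

Definition Pgen m d (B : 'M['F_3]_m) :=
  [/\ B^T = B, (1%:M + B *m B) \in unitmx &
      (forall x : 'rV['F_3]_m, x != 0 -> (d <= wt x + wt (x *m B))%N)].

Definition Pwit m d (B : 'M['F_3]_m) :=
  exists2 x : 'rV['F_3]_m, x != 0 & (wt x + wt (x *m B))%N = d.

Lemma Pgen0 d (B : 'M['F_3]_0) : Pgen d B.
Proof.
split.
- by rewrite [B]flatmx0 [_^T]flatmx0.
- by rewrite unitmxE det_mx00 unitr1.
- by move=> x; rewrite [x]thinmx0 eqxx.
Qed.

Lemma Pgen_step p m d (A : 'M['F_3]_p) (B : 'M['F_3]_m) :
  Pgen d A -> Pgen d B -> Pgen d (block_mx A 0 0 B).
Proof.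
case=> sA uA hA [sB uB hB]; split.
- by rewrite tr_block_mx sA sB !trmx0.
- rewrite mulmx_block !mulmx0 !mul0mx !addr0 !add0r.
  rewrite (scalar_mx_block p m) add_block_mx !addr0.
  rewrite unitmxE det_ublock unitrM -!unitmxE uA uB //.
- move=> x; rewrite -[x]hsubmxK mul_row_block !mulmx0 addr0 add0r.
  rewrite !wt_row_mx -row_mx0 => hx.
  case: (eqVneq (lsubmx x) 0) => h1.
    have h2 : rsubmx x != 0 by apply: contraNneq hx => h2; rewrite h1 h2.
    have := hB _ h2; lia.
  have := hA _ h1; lia.
Qed.

Lemma Pwit_step p m d (A : 'M['F_3]_p) (B : 'M['F_3]_m) :
  Pwit d A -> Pwit d (block_mx A 0 0 B).
Proof.
case=> x hx hw; exists (row_mx x 0).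
  by rewrite -row_mx0; apply: contra_neq hx => /eq_row_mx [].
by rewrite mul_row_block !mulmx0 mul0mx !addr0 !wt_row_mx !wt0 !addn0.
Qed.


Definition Gm m (B : 'M['F_3]_m) : 'M['F_3]_(m + m) := col_mx (row_mx 1%:M B) 0.

Lemma inG m (B : 'M['F_3]_m) (c : 'rV_(m + m)) :
  B^T = B -> reflect (exists x, c = row_mx x (x *m B)) (in_code (Gm B) c).
Proof.
move=> sB; apply: (iffP submxP) => [[z ->]|[x ->]].
  exists (lsubmx z); rewrite -{1}[z]hsubmxK /Gm mul_row_col mulmx0 addr0.
  by rewrite mul_mx_row mulmx1.
exists (row_mx x 0); rewrite /Gm mul_row_col mulmx0 addr0.
by rewrite mul_mx_row mulmx1.
Qed.

Lemma inD m (B : 'M['F_3]_m) (c : 'rV_(m + m)) : B^T = B ->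
  in_code (edual (Gm B)) c = (lsubmx c + rsubmx c *m B == 0).
Proof.
move=> sB; rewrite /in_code /edual sub_kermx /Gm tr_col_mx tr_row_mx trmx1 sB.
rewrite trmx0 mul_mx_row mulmx0 -[c in c *m col_mx _ _]hsubmxK mul_row_col mulmx1.
by rewrite row_mx_eq0 eqxx andbT.
Qed.

Definition phi m (c : 'rV['F_3]_(m + m)) : 'rV['F_3]_(m + m) :=
  row_mx (- rsubmx c) (lsubmx c).

Lemma wt_phi m (c : 'rV['F_3]_(m + m)) : wt (phi c) = wt c.
Proof.
by rewrite /phi wt_row_mx wt_opp -{3}[c]hsubmxK wt_row_mx addnC.
Qed.

Lemma phi_inj m : injective (@phi m).
Proof.
move=> c1 c2 /eq_row_mx [h1 h2].
by rewrite -[c1]hsubmxK -[c2]hsubmxK h2 (oppr_inj h1).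
Qed.

Lemma card_le_phi m (S T : {set 'rV['F_3]_(m + m)}) :
  (forall c, c \in S -> phi c \in T) -> (#|S| <= #|T|)%N.
Proof.
move=> h; rewrite -(card_imset S (@phi_inj m)); apply: subset_leq_card.
by apply/subsetP => y /imsetP [c hc ->]; exact: h.
Qed.

Lemma code_ok m d (B : 'M['F_3]_m) : Pgen d B -> Pwit d B ->
  exists C : code (m + m), fsd_lcd_code C m d.
Proof.
case=> sB uB hB [xw hxw hwd]; exists (Gm B); split.
- apply/andP; split; last exact: sub0mx.
  apply/row_subP => i; have := row_sub i (Gm B :&: edual (Gm B))%MS.
  rewrite sub_capmx => /andP [h1 h2].
  move: h2; rewrite -/(in_code _ _) inD //.
  case/(inG _ sB): h1 => x ->; rewrite row_mxKl row_mxKr => /eqP h.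
  have hx : x = 0.
    have : x *m (1%:M + B *m B) = 0 by rewrite mulmxDr mulmx1 mulmxA.
    by move/(congr1 (mulmx^~ (invmx (1%:M + B *m B)))); rewrite mulmxK // mul0mx.
  by rewrite hx mul0mx row_mx0 sub0mx.
- move=> w; rewrite /wdist; apply/eqP; rewrite eqn_leq; apply/andP; split.
  + apply: card_le_phi => c; rewrite !inE wt_phi => /andP [hc ->]; rewrite andbT.
    case/(inG _ sB): hc => x ->; rewrite inD // /phi !row_mxKl !row_mxKr.
    by rewrite addNr.
  + apply: card_le_phi => c; rewrite !inE wt_phi => /andP [hc ->]; rewrite andbT.
    move: hc; rewrite inD // addr_eq0 => /eqP hl.
    apply/(inG _ sB); exists (- rsubmx c).
    by rewrite /phi hl mulNmx.
- rewrite /Defs.dim /Gm -addsmxE addsmx0; apply/eqP; rewrite eqn_leq rank_leq_row /=.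
  have := mxrankM_maxl (row_mx 1%:M B) (col_mx 1%:M 0).
  by rewrite mul_row_col mulmx1 mulmx0 addr0 mxrank1.
- split.
  + exists (row_mx xw (xw *m B)); first by apply/(inG _ sB); exists xw.
    rewrite row_mx_eq0 negb_and hxw /= wt_row_mx hwd eqxx //.
  + move=> c /(inG _ sB) [x ->]; rewrite wt_row_mx => hc; apply: hB.
    by apply: contraNneq hc => ->; rewrite mul0mx row_mx0.
Qed.

Lemma mx_of_zero p : mx_of p (nseq p (nseq p 0%N)) = 0.
Proof.
apply/matrixP => i j; rewrite !mxE /ent nth_nseq; case: ifP => _.
  by rewrite nth_nseq; case: ifP.
by rewrite nth_nil.
Qed.

Lemma base p t d L Li N lx : wf p L -> wf p Li -> wf p N -> lsym p L ->
  chkI p (lmm p L Li) (nseq p (nseq p 0%N)) -> chkI p (lmm p (lmm p L L) N) N ->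
  check_lw t d p L -> check_lw t d p Li -> (d <= t.+1 + t.+1)%N ->
  size lx == p -> all (fun v => v < 3)%N lx ->
  (nz lx + nz (m3 (lacc lx L p)) == d)%N -> (0 < d)%N ->
  Pgen d (mx_of p L) /\ Pwit d (mx_of p L).
Proof.
move=> wL wLi wN sL cI cN chL chLi hdt /eqP slx alx /eqP hwd hd.
have AAi : mx_of p L *m mx_of p Li = 1%:M.
  by rewrite mx_of_mul // -(chkI_mx cI) mx_of_zero addr0.
have low : forall x : 'rV['F_3]_p, x != 0 -> (d <= wt x + wt (x *m mx_of p L))%N.
  move=> x hx.
  have [h1|h1] := leqP (nz (vl x)) t.
    have hm : vl x \in lowwt t p by rewrite -{2}(size_vl x); apply: lowwt_mem => //; exact: vl_lt3.
    have := allP chL _ hm; rewrite /bw_ok (negbTE (vl_nz hx)) /= -vl_mul //.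
    by rewrite !wt_vl.
  have [h2|h2] := leqP (wt (x *m mx_of p L)) t.
    set y := x *m mx_of p L.
    have hy : y *m mx_of p Li = x by rewrite /y -mulmxA AAi mulmx1.
    have y0 : y != 0 by apply: contraNneq hx => h0; rewrite -hy h0 mul0mx.
    have hm : vl y \in lowwt t p.
      rewrite -{2}(size_vl y); apply: lowwt_mem; first exact: vl_lt3.
      by rewrite -wt_vl.
    have := allP chLi _ hm; rewrite /bw_ok (negbTE (vl_nz y0)) /= -vl_mul //.
    by rewrite -!wt_vl hy addnC.
  rewrite wt_vl; lia.
have vx : vl (\row_(i < p) (nth 0%N lx i)%:R : 'rV['F_3]_p) = lx.
  apply: (@eq_from_nth _ 0%N); first by rewrite size_vl slx.
  move=> j; rewrite size_vl => hj; have -> : j = Ordinal hj by [].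
  rewrite nth_vl mxE F3nat modn_small //.
  by apply: (allP alx); rewrite mem_nth // slx.
split; first split.
- exact: lsym_mx.
- have : (1%:M + mx_of p L *m mx_of p L) *m mx_of p N = 1%:M.
    by rewrite mulmxDl mul1mx !mx_of_mul ?wf_lmm // addrC chkI_mx.
  by case/mulmx1_unit.
- exact: low.
exists (\row_(i < p) (nth 0%N lx i)%:R : 'rV['F_3]_p); last first.
  by rewrite !wt_vl vl_mul // vx.
apply/eqP => h0; move: hwd; rewrite -vx -vl_mul // -!wt_vl h0 mul0mx wt0 => h.
by move: hd; rewrite -h.
Qed.

Lemma family p d (A : 'M['F_3]_p) : Pgen d A /\ Pwit d A -> forall s, (0 < s)%N ->
  exists C : code (s * p + s * p), fsd_lcd_code C (s * p) d.
Proof.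
case=> hA wA.
have H : forall s, exists B : 'M['F_3]_(s * p), Pgen d B /\ ((0 < s)%N -> Pwit d B).
  elim=> [|s [B [hB wB]]]; first by exists 0; split => //; exact: Pgen0.
  rewrite mulSn; exists (block_mx A 0 0 B); split; first exact: Pgen_step.
  by move=> _; exact: Pwit_step.
move=> s hs; case: (H s) => B [hB wB]; exact: code_ok hB (wB hs).
Qed.
Definition A16 : seq (seq nat) := [:: [:: 2; 1; 1; 1; 0; 2; 0; 0; 0; 2; 0; 2; 2; 0; 2; 0]; [:: 1; 0; 2; 2; 1; 1; 2; 0; 0; 1; 2; 0; 0; 0; 2; 0]; [:: 1; 2; 1; 0; 0; 1; 2; 0; 2; 0; 0; 0; 0; 0; 2; 1]; [:: 1; 2; 0; 0; 2; 1; 0; 0; 0; 2; 0; 1; 0; 1; 1; 0]; [:: 0; 1; 0; 2; 2; 2; 2; 0; 2; 0; 0; 2; 0; 1; 0; 0]; [:: 2; 1; 1; 1; 2; 1; 0; 2; 1; 2; 0; 1; 0; 1; 0; 0]; [:: 0; 2; 2; 0; 2; 0; 2; 0; 0; 1; 0; 0; 0; 0; 2; 0]; [:: 0; 0; 0; 0; 0; 2; 0; 2; 0; 1; 2; 2; 2; 2; 1; 0]; [:: 0; 0; 2; 0; 2; 1; 0; 0; 0; 0; 0; 0; 2; 0; 0; 0]; [:: 2; 1; 0; 2; 0; 2; 1; 1; 0; 0; 0; 0; 1; 1; 0; 0]; [:: 0; 2; 0; 0; 0; 0; 0; 2; 0; 0; 0; 1; 1; 0; 0; 0]; [:: 2;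 0; 0; 1; 2; 1; 0; 2; 0; 0; 1; 1; 0; 0; 0; 0]; [:: 2; 0; 0; 0; 0; 0; 0; 2; 2; 1; 1; 0; 0; 0; 0; 2]; [:: 0; 0; 0; 1; 1; 1; 0; 2; 0; 1; 0; 0; 0; 0; 2; 2]; [:: 2; 2; 2; 1; 0; 0; 2; 1; 0; 0; 0; 0; 0; 2; 2; 0]; [:: 0; 0; 1; 0; 0; 0; 0; 0; 0; 0; 0; 0; 2; 2; 0; 1]].
Definition Ai16 : seq (seq nat) := [:: [:: 0; 1; 0; 1; 1; 2; 1; 0; 2; 2; 1; 0; 1; 0; 2; 1]; [:: 1; 0; 0; 2; 0; 1; 2; 1; 1; 2; 2; 0; 1; 0; 0; 1]; [:: 0; 0; 1; 1; 1; 0; 1; 1; 1; 2; 1; 0; 1; 1; 2; 1]; [:: 1; 2; 1; 2; 2; 0; 0; 0; 0; 2; 2; 2; 0; 1; 0; 0]; [:: 1; 0; 1; 2; 0; 2; 1; 0; 1; 1; 1; 2; 1; 0; 2; 0]; [:: 2; 1; 0; 0; 2; 0; 1; 0; 0; 1; 1; 0; 1; 2; 0; 0]; [:: 1; 2; 1; 0; 1; 1; 2; 1; 1; 1; 1; 1; 2; 1; 0; 2]; [:: 0; 1; 1; 0; 0; 0; 1; 1; 1; 0; 1; 0; 2; 1; 0; 2]; [:: 2; 1; 1; 0; 1; 0; 1; 1; 2; 1; 2; 2; 0; 2; 0; 1]; [:: 2; 2; 2; 2; 1; 1; 1; 0; 1; 2; 2; 1; 1; 2; 2; 1]; [:: 1;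 2; 1; 2; 1; 1; 1; 1; 2; 2; 1; 2; 2; 1; 0; 2]; [:: 0; 0; 0; 2; 2; 0; 1; 0; 2; 1; 2; 2; 1; 0; 1; 1]; [:: 1; 1; 1; 0; 1; 1; 2; 2; 0; 1; 2; 1; 2; 1; 2; 2]; [:: 0; 0; 1; 1; 0; 2; 1; 1; 2; 2; 1; 0; 1; 0; 0; 0]; [:: 2; 0; 2; 0; 2; 0; 0; 0; 0; 2; 0; 1; 2; 0; 1; 0]; [:: 1; 1; 1; 0; 0; 0; 2; 2; 1; 1; 2; 1; 2; 0; 0; 2]].
Definition N16 : seq (seq nat) := [:: [:: 2; 0; 0; 1; 1; 2; 1; 0; 1; 0; 2; 1; 0; 0; 0; 2]; [:: 0; 1; 1; 0; 0; 2; 1; 1; 1; 2; 2; 2; 0; 0; 1; 2]; [:: 0; 1; 1; 1; 0; 1; 1; 2; 2; 0; 1; 2; 0; 2; 2; 0]; [:: 1; 0; 1; 2; 1; 2; 2; 1; 2; 2; 2; 1; 2; 2; 0; 0]; [:: 1; 0; 0; 1; 1; 1; 2; 2; 1; 1; 2; 2; 2; 1; 1; 1]; [:: 2; 2; 1; 2; 1; 0; 0; 1; 1; 0; 0; 2; 0; 2; 2; 1]; [:: 1; 1; 1; 2; 2; 0; 2; 0; 0; 2; 1; 1; 1; 0; 1; 0]; [:: 0; 1; 2; 1; 2; 1; 0; 2; 1; 1; 0; 0; 2; 2; 2; 1]; [:: 1; 1; 2; 2; 1; 1; 0; 1; 2; 2; 1; 2; 2; 2; 2; 1]; [:: 0;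 2; 0; 2; 1; 0; 2; 1; 2; 2; 2; 1; 0; 1; 2; 0]; [:: 2; 2; 1; 2; 2; 0; 1; 0; 1; 2; 1; 1; 1; 1; 1; 1]; [:: 1; 2; 2; 1; 2; 2; 1; 0; 2; 1; 1; 1; 1; 0; 2; 2]; [:: 0; 0; 0; 2; 2; 0; 1; 2; 2; 0; 1; 1; 0; 0; 1; 1]; [:: 0; 0; 2; 2; 1; 2; 0; 2; 2; 1; 1; 0; 0; 1; 2; 1]; [:: 0; 1; 2; 0; 1; 2; 1; 2; 2; 2; 1; 2; 1; 2; 1; 0]; [:: 2; 2; 0; 0; 1; 1; 0; 1; 1; 0; 1; 2; 1; 1; 0; 2]].
Definition x16 : seq nat := [:: 0; 0; 0; 0; 0; 0; 0; 0; 1; 0; 0; 0; 0; 0; 0; 0].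

Definition A18 : seq (seq nat) := [:: [:: 0; 0; 2; 2; 0; 1; 1; 1; 0; 2; 0; 1; 0; 0; 2; 0; 0; 2]; [:: 0; 1; 0; 2; 0; 0; 0; 0; 2; 0; 0; 2; 1; 2; 1; 0; 0; 0]; [:: 2; 0; 0; 1; 0; 2; 0; 1; 0; 0; 1; 2; 2; 0; 1; 1; 0; 2]; [:: 2; 2; 1; 0; 0; 0; 0; 2; 1; 0; 0; 0; 1; 2; 0; 1; 1; 0]; [:: 0; 0; 0; 0; 0; 1; 0; 0; 0; 2; 0; 2; 1; 1; 2; 0; 2; 1]; [:: 1; 0; 2; 0; 1; 2; 0; 0; 2; 0; 1; 2; 0; 2; 2; 0; 0; 1]; [:: 1; 0; 0; 0; 0; 0; 2; 1; 1; 2; 2; 1; 2; 0; 0; 0; 0; 2]; [:: 1; 0; 1; 2; 0; 0; 1; 1; 2; 2; 0; 0; 0; 0; 2; 1; 1; 1]; [:: 0; 2; 0; 1; 0; 2; 1; 2; 0; 1; 0; 0; 0; 0; 2; 0; 2; 0]; [:: 2; 0; 0; 0; 2; 0; 2; 2; 1; 2; 0; 0; 0; 1; 0; 0; 1; 0]; [:: 0; 0; 1; 0; 0; 1; 2; 0; 0; 0; 0; 0; 0; 0; 2; 2; 0; 0]; [:: 1; 2; 2; 0; 2; 2; 1; 0; 0; 0; 0; 0; 0; 0; 0; 0; 0; 0]; [:: 0; 1; 2; 1; 1; 0; 2; 0; 0; 0; 0; 0; 0; 1; 1; 0; 0; 2]; [:: 0; 2; 0; 2; 1; 2; 0; 0;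 0; 1; 0; 0; 1; 0; 0; 2; 0; 1]; [:: 2; 1; 1; 0; 2; 2; 0; 2; 2; 0; 2; 0; 1; 0; 2; 0; 2; 1]; [:: 0; 0; 1; 1; 0; 0; 0; 1; 0; 0; 2; 0; 0; 2; 0; 2; 0; 0]; [:: 0; 0; 0; 1; 2; 0; 0; 1; 2; 1; 0; 0; 0; 0; 2; 0; 0; 0]; [:: 2; 0; 2; 0; 1; 1; 2; 1; 0; 0; 0; 0; 2; 1; 1; 0; 0; 1]].
Definition Ai18 : seq (seq nat) := [:: [:: 2; 0; 2; 0; 2; 2; 1; 1; 0; 0; 1; 0; 2; 1; 2; 1; 2; 2]; [:: 0; 2; 0; 0; 1; 0; 0; 0; 2; 0; 2; 1; 0; 1; 0; 0; 1; 1]; [:: 2; 0; 1; 1; 1; 2; 2; 1; 1; 0; 0; 1; 2; 2; 0; 1; 0; 1]; [:: 0; 0; 1; 0; 0; 1; 2; 2; 0; 1; 1; 2; 1; 2; 0; 0; 0; 2]; [:: 2; 1; 1; 0; 0; 2; 2; 1; 2; 1; 2; 0; 0; 2; 0; 1; 2; 0]; [:: 2; 0; 2; 1; 2; 0; 2; 2; 1; 0; 2; 1; 0; 0; 0; 0; 1; 2]; [:: 1; 0; 2; 2; 2; 2; 2; 0; 0; 1; 2; 1; 0; 1; 1; 1; 2; 2]; [:: 1; 0; 1; 2; 1; 2; 0; 2; 1; 0; 0; 0; 2; 1; 2; 1; 2; 2]; [:: 0; 2; 1; 0; 2; 1; 0; 1; 1; 1; 2; 1; 1; 0; 2; 0;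 0; 2]; [:: 0; 0; 0; 1; 1; 0; 1; 0; 1; 2; 2; 0; 2; 1; 1; 1; 0; 0]; [:: 1; 2; 0; 1; 2; 2; 2; 0; 2; 2; 1; 0; 2; 0; 2; 0; 2; 2]; [:: 0; 1; 1; 2; 0; 1; 1; 0; 1; 0; 0; 1; 2; 0; 1; 0; 0; 2]; [:: 2; 0; 2; 1; 0; 0; 0; 2; 1; 2; 2; 2; 2; 2; 1; 1; 0; 1]; [:: 1; 1; 2; 2; 2; 0; 1; 1; 0; 1; 0; 0; 2; 0; 2; 2; 0; 1]; [:: 2; 0; 0; 0; 0; 0; 1; 2; 2; 1; 2; 1; 1; 2; 1; 1; 2; 2]; [:: 1; 0; 1; 0; 1; 0; 1; 1; 0; 1; 0; 0; 1; 2; 1; 2; 0; 2]; [:: 2; 1; 0; 0; 2; 1; 2; 2; 0; 0; 2; 0; 0; 0; 2; 0; 2; 0]; [:: 2; 1; 1; 2; 0; 2; 2; 2; 2; 0; 2; 2; 1; 1; 2; 2; 0; 0]].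
Definition N18 : seq (seq nat) := [:: [:: 2; 0; 0; 2; 0; 1; 0; 1; 2; 0; 2; 2; 0; 2; 2; 2; 0; 0]; [:: 0; 0; 2; 0; 1; 2; 1; 0; 2; 0; 2; 2; 0; 2; 1; 1; 1; 2]; [:: 0; 2; 2; 1; 1; 1; 1; 0; 0; 2; 0; 1; 0; 2; 0; 2; 0; 0]; [:: 2; 0; 1; 2; 1; 0; 0; 1; 1; 0; 1; 1; 1; 0; 1; 1; 0; 2]; [:: 0; 1; 1; 1; 1; 2; 0; 1; 2; 0; 1; 0; 0; 0; 1; 2; 1; 1]; [:: 1; 2; 1; 0; 2; 0; 1; 1; 2; 2; 2; 0; 2; 1; 2; 1; 1; 2]; [:: 0; 1; 1; 0; 0; 1; 1; 2; 2; 2; 2; 0; 2; 1; 2; 1; 2; 0]; [:: 1; 0; 0; 1; 1; 1; 2; 0; 0; 1; 0; 1; 1; 1; 0; 2; 2; 0]; [:: 2; 2; 0; 1; 2; 2; 2; 0; 0; 1; 1; 0; 0; 2; 1; 2; 1; 0]; [:: 0; 0; 2; 0; 0; 2; 2; 1; 1; 2; 1; 1; 1; 0; 1; 2; 1; 0]; [:: 2; 2; 0; 1; 1; 2; 2; 0; 1; 1; 2; 0; 2; 2; 1; 0; 2; 1]; [:: 2; 2; 1; 1; 0; 0; 0; 1; 0; 1; 0; 0; 2; 2; 1; 1; 0; 2]; [:: 0; 0; 0; 1; 0; 2; 2; 1; 0; 1; 2; 2; 2; 2; 2; 0; 2; 0]; [:: 2; 2; 2; 0; 0; 1; 1; 1;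 2; 0; 2; 2; 2; 1; 1; 1; 0; 1]; [:: 2; 1; 0; 1; 1; 2; 2; 0; 1; 1; 1; 1; 2; 1; 2; 1; 0; 2]; [:: 2; 1; 2; 1; 2; 1; 1; 2; 2; 2; 0; 1; 0; 1; 1; 1; 0; 2]; [:: 0; 1; 0; 0; 1; 1; 2; 2; 1; 1; 2; 0; 2; 0; 0; 0; 0; 2]; [:: 0; 2; 0; 2; 1; 2; 0; 0; 0; 0; 1; 2; 0; 1; 2; 2; 2; 2]].
Definition x18 : seq nat := [:: 0; 0; 0; 0; 0; 0; 0; 0; 0; 0; 1; 0; 0; 0; 0; 0; 0; 0].

Definition A20 : seq (seq nat) := [:: [:: 0; 0; 0; 1; 1; 0; 0; 2; 0; 2; 0; 1; 0; 0; 1; 2; 0; 0; 2; 1]; [:: 0; 0; 0; 0; 0; 1; 1; 1; 1; 1; 1; 0; 2; 0; 0; 0; 1; 0; 0; 2]; [:: 0; 0; 2; 2; 1; 0; 0; 0; 0; 0; 2; 0; 1; 0; 0; 2; 0; 1; 1; 2]; [:: 1; 0; 2; 0; 2; 0; 0; 2; 0; 1; 0; 0; 0; 0; 0; 0; 2; 1; 1; 1]; [:: 1; 0; 1; 2; 0; 0; 0; 0; 0; 1; 2; 1; 0; 0; 0; 0; 0; 2; 1; 0]; [:: 0; 1; 0; 0; 0; 0; 2; 0; 0; 0; 2; 0; 2; 0; 1; 2; 0; 0; 1; 0]; [:: 0; 1; 0; 0; 0; 2; 2; 2; 1; 2; 1; 0; 0; 0; 0; 2; 0; 0; 0; 2];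 [:: 2; 1; 0; 2; 0; 0; 2; 0; 2; 2; 0; 0; 0; 0; 0; 0; 1; 1; 2; 1]; [:: 0; 1; 0; 0; 0; 0; 1; 2; 0; 1; 0; 2; 0; 0; 0; 0; 0; 2; 1; 0]; [:: 2; 1; 0; 1; 1; 0; 2; 2; 1; 0; 0; 0; 1; 0; 0; 0; 2; 1; 1; 0]; [:: 0; 1; 2; 0; 2; 2; 1; 0; 0; 0; 2; 1; 0; 2; 2; 0; 0; 1; 0; 1]; [:: 1; 0; 0; 0; 1; 0; 0; 0; 2; 0; 1; 0; 0; 2; 0; 0; 0; 0; 0; 0]; [:: 0; 2; 1; 0; 0; 2; 0; 0; 0; 1; 0; 0; 0; 2; 0; 0; 1; 0; 1; 2]; [:: 0; 0; 0; 0; 0; 0; 0; 0; 0; 0; 2; 2; 2; 0; 0; 2; 0; 0; 2; 0]; [:: 1; 0; 0; 0; 0; 1; 0; 0; 0; 0; 2; 0; 0; 0; 2; 2; 1; 0; 1; 0]; [:: 2; 0; 2; 0; 0; 2; 2; 0; 0; 0; 0; 0; 0; 2; 2; 2; 0; 0; 0; 1]; [:: 0; 1; 0; 2; 0; 0; 0; 1; 0; 2; 0; 0; 1; 0; 1; 0; 2; 0; 0; 1]; [:: 0; 0; 1; 1; 2; 0; 0; 1; 2; 1; 1; 0; 0; 0; 0; 0; 0; 0; 0; 0]; [:: 2; 0; 1; 1; 1; 1; 0; 2; 1; 1; 0; 0; 1; 2; 1; 0; 0; 0; 2; 0]; [:: 1; 2; 2; 1; 0; 0; 2; 1; 0; 0;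 1; 0; 2; 0; 0; 1; 1; 0; 0; 0]].
Definition Ai20 : seq (seq nat) := [:: [:: 0; 0; 0; 0; 0; 2; 2; 0; 1; 2; 2; 2; 2; 1; 2; 1; 1; 1; 2; 2]; [:: 0; 1; 0; 1; 0; 0; 1; 0; 2; 1; 0; 0; 0; 1; 1; 2; 2; 1; 1; 2]; [:: 0; 0; 0; 2; 2; 1; 1; 2; 1; 1; 1; 1; 0; 2; 0; 1; 1; 2; 0; 2]; [:: 0; 1; 2; 2; 1; 2; 0; 0; 1; 1; 0; 2; 0; 0; 1; 0; 1; 1; 1; 2]; [:: 0; 0; 2; 1; 1; 2; 2; 1; 0; 2; 1; 1; 0; 2; 0; 2; 2; 1; 2; 1]; [:: 2; 0; 1; 2; 2; 2; 1; 0; 2; 2; 2; 1; 0; 1; 1; 0; 2; 2; 0; 2]; [:: 2; 1; 1; 0; 2; 1; 2; 1; 0; 0; 0; 1; 0; 1; 0; 2; 2; 1; 0; 0]; [:: 0; 0; 2; 0; 1; 0; 1; 1; 2; 1; 2; 0; 1; 1; 2; 2; 2; 2; 1; 2]; [:: 1; 2; 1; 1; 0; 2; 0; 2; 0; 1; 1; 1; 0; 2; 1; 0; 1; 0; 1; 1]; [:: 2; 1; 1; 1; 2; 2; 0; 1; 1; 1; 2; 0; 1; 2; 2; 0; 0; 1; 0; 0]; [:: 2; 0; 1; 0; 1; 2; 0; 2; 1; 2; 0; 2; 1; 2; 2; 2; 2; 2; 1; 2]; [:: 2; 0; 1; 2; 1; 1; 1; 0; 1; 0; 2; 1; 2; 0;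 0; 1; 0; 0; 0; 0]; [:: 2; 0; 0; 0; 0; 0; 0; 1; 0; 1; 1; 2; 1; 0; 0; 0; 0; 0; 2; 2]; [:: 1; 1; 2; 0; 2; 1; 1; 1; 2; 2; 2; 0; 0; 0; 0; 2; 1; 1; 1; 1]; [:: 2; 1; 0; 1; 0; 1; 0; 2; 1; 2; 2; 0; 0; 0; 1; 2; 1; 0; 2; 0]; [:: 1; 2; 1; 0; 2; 0; 2; 2; 0; 0; 2; 1; 0; 2; 2; 0; 0; 1; 0; 0]; [:: 1; 2; 1; 1; 2; 2; 2; 2; 1; 0; 2; 0; 0; 1; 1; 0; 2; 0; 1; 2]; [:: 1; 1; 2; 1; 1; 2; 1; 2; 0; 1; 2; 0; 0; 1; 0; 1; 0; 1; 0; 2]; [:: 2; 1; 0; 1; 2; 0; 0; 1; 1; 0; 1; 0; 2; 1; 2; 0; 1; 0; 0; 2]; [:: 2; 2; 2; 2; 1; 2; 0; 2; 1; 0; 2; 0; 2; 1; 0; 0; 2; 2; 2; 1]].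
Definition N20 : seq (seq nat) := [:: [:: 0; 0; 1; 1; 2; 2; 1; 1; 0; 1; 0; 0; 1; 1; 0; 0; 1; 2; 0; 2]; [:: 0; 1; 1; 2; 2; 2; 1; 1; 2; 1; 0; 0; 2; 0; 0; 2; 2; 2; 1; 1]; [:: 1; 1; 2; 1; 2; 1; 2; 0; 2; 1; 2; 2; 2; 1; 0; 0; 1; 2; 0; 0]; [:: 1; 2; 1; 1; 1; 1; 1; 2; 0; 0; 1; 0; 1; 2; 0; 1; 1; 2; 2; 0]; [:: 2; 2; 2; 1; 1; 0; 2; 2; 1; 0; 2; 2; 1; 0; 1; 1; 2; 2; 0; 0]; [:: 2; 2; 1; 1; 0; 2; 0; 2; 2; 1; 1; 0; 0; 0; 2; 2; 2; 0; 1; 1]; [:: 1; 1; 2; 1; 2; 0; 2; 0; 2; 2; 1; 0; 0; 1; 2; 1; 1; 1; 1; 1]; [:: 1; 1; 0; 2; 2; 2; 0; 2; 1; 0; 0; 1; 0; 0; 1; 1; 2; 0; 0; 2]; [:: 0; 2; 2; 0; 1; 2; 2; 1; 2; 2; 1; 2; 2; 2; 1; 1; 0; 0; 2; 1]; [:: 1; 1; 1; 0; 0; 1; 2; 0; 2; 2; 0; 2; 2; 2; 0; 1; 2; 1; 1; 2]; [:: 0; 0; 2; 1; 2; 1; 1; 0; 1; 0; 2; 0; 1; 2; 1; 1; 2; 1; 1; 0]; [:: 0; 0; 2; 0; 2; 0; 0; 1; 2; 2; 0; 0; 2; 1; 2; 1; 0; 2; 2; 0]; [:: 1; 2; 2;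 1; 1; 0; 0; 0; 2; 2; 1; 2; 0; 2; 2; 2; 0; 2; 2; 1]; [:: 1; 0; 1; 2; 0; 0; 1; 0; 2; 2; 2; 1; 2; 0; 2; 1; 2; 1; 0; 0]; [:: 0; 0; 0; 0; 1; 2; 2; 1; 1; 0; 1; 2; 2; 2; 2; 2; 0; 2; 1; 2]; [:: 0; 2; 0; 1; 1; 2; 1; 1; 1; 1; 1; 1; 2; 1; 2; 2; 1; 2; 0; 2]; [:: 1; 2; 1; 1; 2; 2; 1; 2; 0; 2; 2; 0; 0; 2; 0; 1; 2; 0; 2; 2]; [:: 2; 2; 2; 2; 2; 0; 1; 0; 0; 1; 1; 2; 2; 1; 2; 2; 0; 2; 0; 0]; [:: 0; 1; 0; 2; 0; 1; 1; 0; 2; 1; 1; 2; 2; 0; 1; 0; 2; 0; 0; 2]; [:: 2; 1; 0; 0; 0; 1; 1; 2; 1; 2; 0; 0; 1; 0; 2; 2; 2; 0; 2; 0]].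
Definition x20 : seq nat := [:: 0; 0; 0; 0; 0; 0; 0; 0; 0; 0; 0; 1; 0; 0; 0; 0; 0; 0; 0; 0].

Definition A22 : seq (seq nat) := [:: [:: 2; 0; 1; 1; 0; 1; 0; 2; 0; 0; 1; 0; 2; 1; 1; 1; 0; 0; 1; 1; 0; 0]; [:: 0; 0; 0; 1; 2; 0; 1; 0; 0; 0; 0; 0; 0; 0; 0; 0; 0; 0; 0; 2; 1; 1]; [:: 1; 0; 0; 0; 2; 0; 0; 1; 0; 0; 0; 1; 2; 0; 0; 0; 0; 0; 2; 2; 2; 2]; [:: 1; 1; 0; 0; 0; 1; 0; 0; 1; 0; 0; 1; 0; 1; 0; 2; 1; 0; 0; 0; 2; 0]; [:: 0; 2; 2; 0; 1; 1; 0; 1; 0; 0; 2; 0; 0; 0; 0; 0; 2; 1; 0; 0; 0; 0]; [:: 1; 0; 0; 1; 1; 0; 0; 0; 0; 0; 0; 2; 0; 2; 2; 0; 0; 0; 0; 0; 0; 0]; [:: 0; 1; 0; 0; 0; 0; 0; 0; 0; 1; 1; 2; 0; 2; 1; 2; 2; 0; 0; 0; 1; 2]; [:: 2; 0; 1; 0; 1; 0; 0; 0; 0; 2; 0; 1; 0; 2; 1; 0; 0; 0; 0; 1; 0; 2]; [:: 0; 0; 0; 1; 0; 0; 0; 0; 1; 1; 0; 0; 2; 0; 0; 2; 1; 2; 0; 0; 0; 0]; [:: 0; 0; 0; 0; 0; 0; 1; 2; 1; 0; 1; 0; 2; 0; 2; 1; 0; 0; 0; 1; 0; 0]; [:: 1;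 0; 0; 0; 2; 0; 1; 0; 0; 1; 0; 0; 1; 2; 2; 0; 0; 0; 0; 2; 2; 1]; [:: 0; 0; 1; 1; 0; 2; 2; 1; 0; 0; 0; 0; 1; 2; 2; 2; 0; 0; 1; 0; 1; 0]; [:: 2; 0; 2; 0; 0; 0; 0; 0; 2; 2; 1; 1; 0; 0; 0; 0; 1; 1; 0; 1; 0; 0]; [:: 1; 0; 0; 1; 0; 2; 2; 2; 0; 0; 2; 2; 0; 2; 2; 1; 0; 0; 0; 2; 2; 0]; [:: 1; 0; 0; 0; 0; 2; 1; 1; 0; 2; 2; 2; 0; 2; 2; 0; 1; 1; 1; 0; 1; 2]; [:: 1; 0; 0; 2; 0; 0; 2; 0; 2; 1; 0; 2; 0; 1; 0; 0; 0; 0; 2; 1; 0; 0]; [:: 0; 0; 0; 1; 2; 0; 2; 0; 1; 0; 0; 0; 1; 0; 1; 0; 2; 1; 0; 0; 0; 0]; [:: 0; 0; 0; 0; 1; 0; 0; 0; 2; 0; 0; 0; 1; 0; 1; 0; 1; 2; 0; 0; 0; 2]; [:: 1; 0; 2; 0; 0; 0; 0; 0; 0; 0; 0; 1; 0; 0; 1; 2; 0; 0; 0; 1; 0; 2]; [:: 1; 2; 2; 0; 0; 0; 0; 1; 0; 1; 2; 0; 1; 2; 0; 1; 0; 0; 1; 0; 0; 0]; [:: 0; 1; 2; 2; 0; 0; 1; 0; 0; 0; 2; 1; 0; 2; 1; 0; 0; 0; 0; 0; 0; 0]; [:: 0; 1; 2; 0; 0; 0; 2; 2; 0; 0; 1;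 0; 0; 0; 2; 0; 0; 2; 2; 0; 0; 0]].
Definition Ai22 : seq (seq nat) := [:: [:: 1; 0; 2; 1; 0; 1; 2; 2; 1; 2; 1; 0; 1; 0; 2; 0; 2; 2; 0; 1; 2; 2]; [:: 0; 0; 1; 2; 2; 2; 1; 2; 1; 1; 0; 0; 2; 1; 0; 1; 2; 0; 2; 1; 2; 2]; [:: 2; 1; 0; 2; 1; 2; 0; 2; 0; 2; 0; 1; 1; 2; 2; 1; 0; 2; 1; 1; 1; 2]; [:: 1; 2; 2; 2; 1; 1; 1; 1; 2; 0; 0; 1; 0; 0; 0; 0; 1; 2; 2; 1; 1; 1]; [:: 0; 2; 1; 1; 1; 1; 0; 2; 1; 1; 2; 2; 0; 0; 0; 1; 1; 0; 1; 1; 0; 1]; [:: 1; 2; 2; 1; 1; 1; 2; 2; 2; 0; 0; 2; 0; 0; 0; 0; 1; 1; 1; 1; 0; 2]; [:: 2; 1; 0; 1; 0; 2; 1; 2; 1; 2; 0; 1; 2; 2; 0; 2; 2; 2; 2; 0; 0; 1]; [:: 2; 2; 2; 1; 2; 2; 2; 2; 1; 0; 0; 0; 2; 0; 2; 2; 0; 1; 2; 1; 2; 1]; [:: 1; 1; 0; 2; 1; 2; 1; 1; 2; 1; 1; 2; 1; 0; 2; 2; 1; 2; 2; 1; 1; 1]; [:: 2; 1; 2; 0; 1; 0; 2; 0; 1; 1; 0; 2; 1; 2; 2; 2; 0; 2; 2; 2; 0; 1]; [:: 1; 0; 0; 0; 2; 0; 0; 0; 1; 0; 2; 2; 2; 2;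 2; 2; 1; 1; 2; 2; 2; 2]; [:: 0; 0; 1; 1; 2; 2; 1; 0; 2; 2; 2; 1; 2; 0; 2; 1; 1; 0; 1; 1; 2; 2]; [:: 1; 2; 1; 0; 0; 0; 2; 2; 1; 1; 2; 2; 0; 1; 1; 2; 1; 1; 0; 2; 0; 0]; [:: 0; 1; 2; 0; 0; 0; 2; 0; 0; 2; 2; 0; 1; 1; 2; 2; 0; 2; 1; 0; 0; 1]; [:: 2; 0; 2; 0; 0; 0; 0; 2; 2; 2; 2; 2; 1; 2; 1; 1; 0; 2; 1; 2; 1; 1]; [:: 0; 1; 1; 0; 1; 0; 2; 2; 2; 2; 2; 1; 2; 2; 1; 1; 0; 1; 2; 1; 2; 1]; [:: 2; 2; 0; 1; 1; 1; 2; 0; 1; 0; 1; 1; 1; 0; 0; 0; 0; 1; 0; 0; 1; 0]; [:: 2; 0; 2; 2; 0; 1; 2; 1; 2; 2; 1; 0; 1; 2; 2; 1; 1; 2; 1; 1; 1; 2]; [:: 0; 2; 1; 2; 1; 1; 2; 2; 2; 2; 2; 1; 0; 1; 1; 2; 0; 1; 0; 1; 2; 2]; [:: 1; 1; 1; 1; 1; 1; 0; 1; 1; 2; 2; 1; 2; 0; 2; 1; 0; 1; 1; 1; 1; 0]; [:: 2; 2; 1; 1; 0; 0; 0; 2; 1; 0; 2; 2; 0; 0; 1; 2; 1; 1; 2; 1; 0; 0]; [:: 2; 2; 2; 1; 1; 2; 1; 1; 1; 1; 2; 2; 0; 1; 1; 1; 0; 2; 2; 0; 0; 2]].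
Definition N22 : seq (seq nat) := [:: [:: 1; 2; 0; 2; 1; 1; 1; 1; 1; 2; 0; 2; 0; 2; 0; 2; 2; 2; 0; 2; 2; 0]; [:: 2; 0; 2; 0; 1; 0; 2; 0; 2; 2; 2; 0; 0; 0; 0; 2; 2; 1; 2; 2; 2; 2]; [:: 0; 2; 0; 2; 2; 0; 1; 0; 2; 0; 1; 0; 0; 2; 2; 2; 0; 1; 0; 2; 0; 0]; [:: 2; 0; 2; 0; 0; 1; 0; 2; 2; 1; 0; 2; 2; 0; 1; 0; 2; 0; 2; 1; 2; 1]; [:: 1; 1; 2; 0; 1; 2; 1; 2; 1; 2; 2; 0; 2; 0; 1; 1; 0; 2; 1; 0; 2; 0]; [:: 1; 0; 0; 1; 2; 2; 2; 0; 1; 1; 2; 1; 0; 2; 0; 2; 1; 0; 1; 0; 1; 1]; [:: 1; 2; 1; 0; 1; 2; 2; 2; 0; 1; 2; 2; 0; 0; 0; 2; 2; 0; 2; 1; 2; 1]; [:: 1; 0; 0; 2; 2; 0; 2; 0; 0; 0; 0; 0; 2; 2; 2; 1; 0; 2; 2; 0; 0; 0]; [:: 1; 2; 2; 2; 1; 1; 0; 0; 1; 2; 1; 2; 2; 2; 1; 0; 1; 2; 0; 0; 1; 1]; [:: 2; 2; 0; 1; 2; 1; 1; 0; 2; 0; 1; 0; 2; 1; 0; 2; 2; 2; 0; 0; 1; 0]; [:: 0; 2; 1; 0; 2; 2; 2; 0; 1; 1; 0; 2; 1; 2; 1; 2; 0; 1; 1; 1; 2; 2]; [:: 2; 0; 0;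 2; 0; 1; 2; 0; 2; 0; 2; 0; 2; 1; 2; 0; 0; 2; 1; 0; 1; 0]; [:: 0; 0; 0; 2; 2; 0; 0; 2; 2; 2; 1; 2; 2; 2; 2; 0; 2; 0; 0; 1; 1; 2]; [:: 2; 0; 2; 0; 0; 2; 0; 2; 2; 1; 2; 1; 2; 0; 1; 2; 2; 0; 1; 2; 2; 2]; [:: 0; 0; 2; 1; 1; 0; 0; 2; 1; 0; 1; 2; 2; 1; 2; 0; 2; 1; 2; 0; 2; 0]; [:: 2; 2; 2; 0; 1; 2; 2; 1; 0; 2; 2; 0; 0; 2; 0; 0; 1; 0; 0; 2; 2; 2]; [:: 2; 2; 0; 2; 0; 1; 2; 0; 1; 2; 0; 0; 2; 2; 2; 1; 1; 0; 1; 2; 2; 0]; [:: 2; 1; 1; 0; 2; 0; 0; 2; 2; 2; 1; 2; 0; 0; 1; 0; 0; 0; 2; 2; 2; 0]; [:: 0; 2; 0; 2; 1; 1; 2; 2; 0; 0; 1; 1; 0; 1; 2; 0; 1; 2; 0; 1; 0; 2]; [:: 2; 2; 2; 1; 0; 0; 1; 0; 0; 0; 1; 0; 1; 2; 0; 2; 2; 2; 1; 2; 2; 2]; [:: 2; 2; 0; 2; 2; 1; 2; 0; 1; 1; 2; 1; 1; 2; 2; 2; 2; 2; 0; 2; 2; 2]; [:: 0; 2; 0; 1; 0; 1; 1; 0; 1; 0; 2; 0; 2; 2; 0; 2; 0; 0; 2; 2; 2; 2]].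
Definition x22 : seq nat := [:: 0; 1; 0; 0; 0; 0; 0; 0; 0; 0; 0; 0; 0; 0; 0; 0; 0; 0; 0; 0; 0; 0].

Definition A24 : seq (seq nat) := [:: [:: 1; 2; 0; 1; 1; 0; 2; 0; 0; 0; 0; 2; 1; 1; 0; 0; 0; 0; 0; 2; 2; 0; 1; 1]; [:: 2; 0; 1; 1; 0; 0; 0; 2; 2; 2; 0; 0; 0; 0; 0; 0; 0; 0; 0; 0; 0; 0; 2; 0]; [:: 0; 1; 1; 2; 0; 1; 0; 2; 1; 0; 2; 2; 1; 0; 0; 1; 0; 2; 0; 0; 1; 0; 1; 1]; [:: 1; 1; 2; 2; 0; 1; 0; 0; 0; 0; 0; 0; 2; 1; 0; 0; 0; 2; 1; 0; 0; 0; 2; 0]; [:: 1; 0; 0; 0; 1; 0; 2; 0; 0; 0; 2; 0; 0; 2; 0; 0; 1; 1; 1; 0; 1; 0; 0; 0]; [:: 0; 0; 1; 1; 0; 0; 0; 0; 2; 1; 1; 0; 0; 0; 1; 2; 0; 0; 1; 0; 0; 2; 0; 0]; [:: 2; 0; 0; 0; 2; 0; 0; 0; 0; 0; 0; 1; 2; 0; 0; 0; 0; 1; 2; 2; 0; 1; 0; 1]; [:: 0; 2; 2; 0; 0; 0; 0; 0; 0; 2; 0; 1; 0; 1; 1; 1; 2; 1; 0; 1; 0; 0; 1; 0]; [:: 0; 2; 1; 0; 0; 2; 0; 0; 0; 1; 1; 2; 2; 2; 1; 0; 0; 1; 2; 1; 0; 0; 2; 0]; [:: 0; 2; 0; 0;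 0; 1; 0; 2; 1; 1; 0; 1; 0; 1; 0; 0; 0; 0; 0; 0; 0; 0; 0; 1]; [:: 0; 0; 2; 0; 2; 1; 0; 0; 1; 0; 0; 0; 0; 0; 0; 0; 0; 2; 0; 0; 0; 1; 0; 1]; [:: 2; 0; 2; 0; 0; 0; 1; 1; 2; 1; 0; 2; 0; 1; 0; 0; 1; 0; 2; 0; 2; 0; 0; 0]; [:: 1; 0; 1; 2; 0; 0; 2; 0; 2; 0; 0; 0; 0; 1; 0; 0; 1; 0; 0; 0; 0; 2; 2; 0]; [:: 1; 0; 0; 1; 2; 0; 0; 1; 2; 1; 0; 1; 1; 0; 0; 2; 0; 0; 0; 0; 0; 2; 0; 0]; [:: 0; 0; 0; 0; 0; 1; 0; 1; 1; 0; 0; 0; 0; 0; 0; 0; 2; 1; 0; 1; 2; 2; 0; 2]; [:: 0; 0; 1; 0; 0; 2; 0; 1; 0; 0; 0; 0; 0; 2; 0; 0; 0; 0; 0; 1; 0; 0; 1; 0]; [:: 0; 0; 0; 0; 1; 0; 0; 2; 0; 0; 0; 1; 1; 0; 2; 0; 1; 2; 0; 0; 0; 0; 1; 0]; [:: 0; 0; 2; 2; 1; 0; 1; 1; 1; 0; 2; 0; 0; 0; 1; 0; 2; 2; 0; 2; 0; 0; 1; 0]; [:: 0; 0; 0; 1; 1; 1; 2; 0; 2; 0; 0; 2; 0; 0; 0; 0; 0; 0; 0; 1; 2; 1; 2; 2]; [:: 2; 0; 0; 0; 0; 0; 2; 1; 1; 0; 0; 0; 0; 0; 1; 1; 0; 2;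 1; 0; 0; 1; 0; 2]; [:: 2; 0; 1; 0; 1; 0; 0; 0; 0; 0; 0; 2; 0; 0; 2; 0; 0; 0; 2; 0; 0; 2; 0; 0]; [:: 0; 0; 0; 0; 0; 2; 1; 0; 0; 0; 1; 0; 2; 2; 2; 0; 0; 0; 1; 1; 2; 2; 1; 0]; [:: 1; 2; 1; 2; 0; 0; 0; 1; 2; 0; 0; 0; 2; 0; 0; 1; 1; 1; 2; 0; 0; 1; 2; 1]; [:: 1; 0; 1; 0; 0; 0; 1; 0; 0; 1; 1; 0; 0; 0; 2; 0; 0; 0; 2; 2; 0; 0; 1; 1]].
Definition Ai24 : seq (seq nat) := [:: [:: 0; 0; 0; 0; 2; 2; 2; 0; 2; 2; 1; 0; 1; 0; 0; 1; 1; 0; 1; 0; 2; 1; 2; 0]; [:: 0; 0; 2; 2; 1; 0; 2; 1; 2; 2; 0; 0; 1; 0; 2; 2; 0; 0; 0; 2; 1; 1; 1; 0]; [:: 0; 2; 0; 1; 1; 0; 2; 0; 1; 1; 1; 0; 1; 0; 1; 2; 2; 2; 1; 1; 0; 2; 2; 0]; [:: 0; 2; 1; 2; 0; 0; 1; 0; 2; 1; 0; 0; 1; 0; 2; 1; 2; 1; 1; 2; 0; 1; 0; 2]; [:: 2; 1; 1; 0; 1; 2; 2; 1; 1; 1; 1; 1; 1; 0; 2; 1; 2; 1; 0; 1; 1; 0; 2; 0]; [:: 2; 0; 0; 0; 2; 0; 1; 1; 0; 1; 1; 0; 1; 1; 1; 2; 1; 1; 1; 1; 2; 1; 2; 2];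 [:: 2; 2; 2; 1; 2; 1; 2; 2; 1; 1; 1; 0; 2; 1; 0; 1; 0; 2; 1; 1; 0; 1; 0; 0]; [:: 0; 1; 0; 0; 1; 1; 2; 2; 2; 2; 2; 0; 2; 2; 2; 0; 2; 1; 2; 1; 0; 0; 0; 2]; [:: 2; 2; 1; 2; 1; 0; 1; 2; 2; 0; 0; 0; 2; 1; 1; 0; 0; 0; 0; 1; 2; 2; 0; 1]; [:: 2; 2; 1; 1; 1; 1; 1; 2; 0; 1; 0; 0; 2; 0; 1; 2; 1; 1; 0; 1; 2; 2; 0; 0]; [:: 1; 0; 1; 0; 1; 1; 1; 2; 0; 0; 2; 1; 2; 2; 2; 1; 2; 0; 0; 2; 1; 1; 1; 1]; [:: 0; 0; 0; 0; 1; 0; 0; 0; 0; 0; 1; 2; 0; 1; 0; 2; 1; 1; 0; 1; 2; 2; 0; 0]; [:: 1; 1; 1; 1; 1; 1; 2; 2; 2; 2; 2; 0; 0; 1; 0; 1; 0; 0; 2; 1; 1; 2; 1; 0]; [:: 0; 0; 0; 0; 0; 1; 1; 2; 1; 0; 2; 1; 1; 1; 1; 1; 2; 1; 0; 0; 1; 1; 0; 1]; [:: 0; 2; 1; 2; 2; 1; 0; 2; 1; 1; 2; 0; 0; 1; 0; 2; 0; 2; 0; 0; 2; 0; 2; 0]; [:: 1; 2; 2; 1; 1; 2; 1; 0; 0; 2; 1; 2; 1; 1; 2; 0; 1; 0; 1; 2; 2; 0; 0; 1]; [:: 1; 0; 2; 2; 2; 1; 0; 2; 0; 1; 2; 1;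 0; 2; 0; 1; 1; 1; 1; 2; 1; 1; 0; 0]; [:: 0; 0; 2; 1; 1; 1; 2; 1; 0; 1; 0; 1; 0; 1; 2; 0; 1; 1; 0; 1; 0; 0; 1; 0]; [:: 1; 0; 1; 1; 0; 1; 1; 2; 0; 0; 0; 0; 2; 0; 0; 1; 1; 0; 1; 2; 1; 2; 2; 1]; [:: 0; 2; 1; 2; 1; 1; 1; 1; 1; 1; 2; 1; 1; 0; 0; 2; 2; 1; 2; 2; 0; 2; 0; 2]; [:: 2; 1; 0; 0; 1; 2; 0; 0; 2; 2; 1; 2; 1; 1; 2; 2; 1; 0; 1; 0; 0; 2; 0; 1]; [:: 1; 1; 2; 1; 0; 1; 1; 0; 2; 2; 1; 2; 2; 1; 0; 0; 1; 0; 2; 2; 2; 0; 1; 2]; [:: 2; 1; 2; 0; 2; 2; 0; 0; 0; 0; 1; 0; 1; 0; 2; 0; 0; 1; 2; 0; 0; 1; 0; 2]; [:: 0; 0; 0; 2; 0; 2; 0; 2; 1; 0; 1; 0; 0; 1; 0; 1; 0; 0; 1; 2; 1; 2; 2; 1]].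
Definition N24 : seq (seq nat) := [:: [:: 0; 1; 2; 1; 0; 2; 1; 1; 1; 2; 1; 2; 2; 1; 0; 1; 2; 0; 0; 0; 0; 0; 2; 0]; [:: 1; 0; 0; 0; 1; 2; 0; 0; 0; 2; 1; 0; 0; 0; 2; 1; 0; 0; 0; 0; 1; 0; 2; 0]; [:: 2; 0; 1; 0; 2; 0; 1; 1; 1; 1; 2; 0; 2; 1; 0; 1; 0; 2; 2; 0; 1; 2; 0; 1]; [:: 1; 0; 0; 0; 2; 0; 1; 1; 1; 2; 2; 2; 1; 1; 0; 0; 1; 0; 2; 2; 0; 0; 0; 0]; [:: 0; 1; 2; 2; 2; 1; 1; 0; 0; 1; 0; 2; 1; 1; 1; 0; 0; 2; 1; 1; 1; 2; 1; 1]; [:: 2; 2; 0; 0; 1; 2; 2; 1; 1; 0; 2; 1; 2; 2; 2; 0; 0; 1; 1; 1; 0; 0; 1; 2]; [:: 1; 0; 1; 1; 1; 2; 2; 0; 0; 2; 1; 1; 0; 2; 1; 2; 1; 0; 1; 0; 0; 2; 1; 0]; [:: 1; 0; 1; 1; 0; 1; 0; 1; 0; 2; 0; 2; 2; 0; 1; 0; 0; 1; 0; 2; 2; 2; 1; 0]; [:: 1; 0; 1; 1; 0; 1; 0; 0; 1; 0; 2; 0; 2; 1; 2; 2; 2; 0; 0; 0; 2; 2; 2; 2]; [:: 2; 2; 1; 2; 1; 0; 2; 2; 0; 2; 0; 0; 0; 0; 1; 1; 0; 0; 0; 2; 1; 0; 2; 0]; [:: 1; 1; 2; 2; 0; 2;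 1; 0; 2; 0; 2; 1; 0; 1; 1; 2; 1; 0; 1; 0; 2; 1; 0; 2]; [:: 2; 0; 0; 2; 2; 1; 1; 2; 0; 0; 1; 2; 1; 1; 2; 1; 2; 0; 0; 1; 0; 1; 1; 0]; [:: 2; 0; 2; 1; 1; 2; 0; 2; 2; 0; 0; 1; 2; 0; 2; 2; 1; 0; 0; 1; 2; 1; 1; 0]; [:: 1; 0; 1; 1; 1; 2; 2; 0; 1; 0; 1; 1; 0; 0; 2; 0; 0; 1; 0; 2; 2; 0; 2; 2]; [:: 0; 2; 0; 0; 1; 2; 1; 1; 2; 1; 1; 2; 2; 2; 1; 2; 1; 1; 1; 2; 0; 2; 1; 0]; [:: 1; 1; 1; 0; 0; 0; 2; 0; 2; 1; 2; 1; 2; 0; 2; 2; 1; 1; 1; 2; 2; 1; 0; 1]; [:: 2; 0; 0; 1; 0; 0; 1; 0; 2; 0; 1; 2; 1; 0; 1; 1; 2; 2; 0; 2; 2; 2; 2; 2]; [:: 0; 0; 2; 0; 2; 1; 0; 1; 0; 0; 0; 0; 0; 1; 1; 1; 2; 1; 1; 1; 2; 2; 0; 2]; [:: 0; 0; 2; 2; 1; 1; 1; 0; 0; 0; 1; 0; 0; 0; 1; 1; 0; 1; 2; 2; 0; 1; 1; 2]; [:: 0; 0; 0; 2; 1; 1; 0; 2; 0; 2; 0; 1; 1; 2; 2; 2; 2; 1; 2; 2; 2; 2; 2; 2]; [:: 0; 1; 1; 0; 1; 0; 0; 2; 2; 1; 2; 0; 2; 2; 0; 2; 2; 2; 0; 2;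 0; 2; 1; 0]; [:: 0; 0; 2; 0; 2; 0; 2; 2; 2; 0; 1; 1; 1; 0; 2; 1; 2; 2; 1; 2; 2; 1; 0; 0]; [:: 2; 2; 0; 0; 1; 1; 1; 1; 2; 2; 0; 1; 1; 2; 1; 0; 2; 0; 1; 2; 1; 0; 2; 1]; [:: 0; 0; 1; 0; 1; 2; 0; 0; 2; 0; 2; 0; 0; 2; 0; 1; 2; 2; 2; 2; 0; 0; 1; 0]].
Definition x24 : seq nat := [:: 0; 0; 0; 0; 0; 0; 0; 0; 0; 0; 0; 0; 0; 0; 0; 1; 0; 0; 0; 0; 0; 0; 0; 0].

Definition A26 : seq (seq nat) := [:: [:: 2; 0; 0; 2; 0; 0; 0; 0; 0; 1; 2; 2; 1; 0; 0; 1; 0; 0; 0; 1; 0; 1; 1; 0; 0; 1]; [:: 0; 1; 0; 0; 2; 1; 0; 2; 1; 1; 1; 2; 0; 0; 0; 1; 2; 0; 2; 0; 0; 0; 1; 0; 1; 0]; [:: 0; 0; 2; 0; 0; 2; 0; 1; 2; 2; 2; 0; 0; 0; 0; 1; 0; 0; 2; 0; 0; 0; 1; 0; 0; 0]; [:: 2; 0; 0; 2; 2; 0; 0; 0; 1; 0; 1; 0; 0; 0; 2; 0; 0; 0; 0; 1; 0; 0; 1; 2; 0; 0]; [:: 0; 2; 0; 2; 2; 0; 0; 0; 0; 0; 0; 0; 0; 0; 0; 1; 2; 2; 0; 0; 0; 2; 0; 1; 0; 1]; [:: 0; 1; 2; 0; 0; 1; 2; 0; 0; 0; 0; 0; 0;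 0; 0; 0; 1; 0; 0; 0; 0; 2; 2; 0; 0; 0]; [:: 0; 0; 0; 0; 0; 2; 0; 0; 0; 2; 2; 2; 1; 1; 0; 0; 0; 2; 2; 0; 0; 0; 2; 1; 1; 0]; [:: 0; 2; 1; 0; 0; 0; 0; 0; 2; 0; 0; 0; 0; 0; 0; 0; 0; 1; 2; 0; 0; 0; 2; 0; 2; 0]; [:: 0; 1; 2; 1; 0; 0; 0; 2; 0; 2; 2; 1; 1; 0; 2; 2; 0; 0; 0; 0; 1; 0; 0; 2; 0; 1]; [:: 1; 1; 2; 0; 0; 0; 2; 0; 2; 0; 0; 1; 0; 0; 0; 2; 1; 0; 1; 2; 1; 0; 2; 0; 0; 0]; [:: 2; 1; 2; 1; 0; 0; 2; 0; 2; 0; 1; 1; 0; 0; 0; 2; 0; 2; 0; 0; 0; 0; 0; 1; 2; 1]; [:: 2; 2; 0; 0; 0; 0; 2; 0; 1; 1; 1; 0; 2; 1; 0; 0; 2; 0; 0; 0; 0; 2; 2; 0; 0; 2]; [:: 1; 0; 0; 0; 0; 0; 1; 0; 1; 0; 0; 2; 0; 0; 0; 1; 0; 0; 2; 2; 1; 0; 0; 0; 0; 2]; [:: 0; 0; 0; 0; 0; 0; 1; 0; 0; 0; 0; 1; 0; 0; 1; 1; 0; 0; 0; 1; 0; 0; 2; 2; 1; 1]; [:: 0; 0; 0; 2; 0; 0; 0; 0; 2; 0; 0; 0; 0; 1; 2; 0; 2; 1; 0; 0; 0; 0; 0; 0; 0; 0]; [:: 1; 1; 1; 0; 1; 0; 0;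 0; 2; 2; 2; 0; 1; 1; 0; 0; 0; 2; 0; 2; 1; 2; 1; 0; 0; 0]; [:: 0; 2; 0; 0; 2; 1; 0; 0; 0; 1; 0; 2; 0; 0; 2; 0; 0; 0; 0; 1; 0; 0; 0; 0; 0; 2]; [:: 0; 0; 0; 0; 2; 0; 2; 1; 0; 0; 2; 0; 0; 0; 1; 2; 0; 0; 1; 1; 1; 0; 2; 0; 1; 0]; [:: 0; 2; 2; 0; 0; 0; 2; 2; 0; 1; 0; 0; 2; 0; 0; 0; 0; 1; 0; 2; 0; 0; 2; 1; 0; 2]; [:: 1; 0; 0; 1; 0; 0; 0; 0; 0; 2; 0; 0; 2; 1; 0; 2; 1; 1; 2; 0; 0; 0; 0; 2; 0; 0]; [:: 0; 0; 0; 0; 0; 0; 0; 0; 1; 1; 0; 0; 1; 0; 0; 1; 0; 1; 0; 0; 2; 1; 0; 1; 0; 0]; [:: 1; 0; 0; 0; 2; 2; 0; 0; 0; 0; 0; 2; 0; 0; 0; 2; 0; 0; 0; 0; 1; 0; 0; 1; 0; 2]; [:: 1; 1; 1; 1; 0; 2; 2; 2; 0; 2; 0; 2; 0; 2; 0; 1; 0; 2; 2; 0; 0; 0; 0; 1; 0; 0]; [:: 0; 0; 0; 2; 1; 0; 1; 0; 2; 0; 1; 0; 0; 2; 0; 0; 0; 0; 1; 2; 1; 1; 1; 0; 1; 0]; [:: 0; 1; 0; 0; 0; 0; 1; 2; 0; 0; 2; 0; 0; 1; 0; 0; 0; 1; 0; 0; 0; 0; 0; 1; 0; 0]; [:: 1;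 0; 0; 0; 1; 0; 0; 0; 1; 0; 1; 2; 2; 1; 0; 0; 2; 0; 2; 0; 0; 2; 0; 0; 0; 0]].
Definition Ai26 : seq (seq nat) := [:: [:: 0; 0; 1; 2; 1; 2; 2; 2; 2; 1; 2; 0; 2; 0; 2; 2; 1; 1; 1; 0; 1; 1; 2; 1; 0; 0]; [:: 0; 1; 2; 2; 0; 2; 1; 0; 0; 2; 1; 2; 0; 2; 1; 0; 1; 2; 1; 1; 1; 2; 2; 1; 0; 1]; [:: 1; 2; 0; 2; 0; 0; 1; 0; 0; 0; 1; 1; 0; 2; 2; 0; 2; 1; 1; 2; 2; 0; 0; 1; 1; 0]; [:: 2; 2; 2; 1; 1; 0; 2; 0; 0; 1; 1; 1; 1; 0; 2; 0; 1; 1; 1; 0; 2; 0; 2; 2; 1; 1]; [:: 1; 0; 0; 1; 0; 2; 0; 2; 2; 1; 1; 2; 0; 1; 1; 1; 2; 2; 2; 1; 2; 2; 2; 0; 2; 1]; [:: 2; 2; 0; 0; 2; 1; 0; 0; 0; 0; 1; 0; 0; 0; 0; 2; 0; 0; 1; 1; 2; 1; 1; 2; 2; 1]; [:: 2; 1; 1; 2; 0; 0; 0; 0; 2; 0; 0; 2; 2; 2; 0; 0; 1; 0; 2; 0; 0; 2; 2; 0; 0; 0]; [:: 2; 0; 0; 0; 2; 0; 0; 0; 1; 0; 1; 1; 0; 1; 1; 1; 2; 0; 1; 1; 2; 0; 2; 0; 1; 0]; [:: 2; 0; 0; 0; 2; 0; 2; 1; 2; 1; 0; 1; 2; 0; 2;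 0; 2; 0; 2; 2; 0; 2; 1; 2; 1; 1]; [:: 1; 2; 0; 1; 1; 0; 0; 0; 1; 1; 2; 0; 2; 1; 2; 2; 2; 2; 2; 1; 2; 0; 1; 0; 2; 0]; [:: 2; 1; 1; 1; 1; 1; 0; 1; 0; 2; 2; 2; 2; 2; 2; 2; 1; 2; 1; 1; 1; 1; 1; 1; 0; 1]; [:: 0; 2; 1; 1; 2; 0; 2; 1; 1; 0; 2; 0; 2; 0; 0; 1; 0; 2; 0; 1; 0; 0; 2; 0; 1; 0]; [:: 2; 0; 0; 1; 0; 0; 2; 0; 2; 2; 2; 2; 0; 0; 2; 0; 0; 2; 2; 0; 0; 2; 2; 1; 2; 1]; [:: 0; 2; 2; 0; 1; 0; 2; 1; 0; 1; 2; 0; 0; 0; 2; 0; 0; 2; 1; 2; 2; 2; 2; 0; 2; 1]; [:: 2; 1; 2; 2; 1; 0; 0; 1; 2; 2; 2; 0; 2; 2; 0; 1; 1; 1; 1; 2; 0; 2; 1; 2; 1; 2]; [:: 2; 0; 0; 0; 1; 2; 0; 1; 0; 2; 2; 1; 0; 0; 1; 2; 1; 2; 0; 0; 1; 0; 0; 1; 2; 1]; [:: 1; 1; 2; 1; 2; 0; 1; 2; 2; 2; 1; 0; 0; 0; 1; 1; 0; 1; 0; 1; 0; 0; 1; 0; 2; 1]; [:: 1; 2; 1; 1; 2; 0; 0; 0; 0; 2; 2; 2; 2; 2; 1; 2; 1; 1; 0; 0; 0; 2; 0; 0; 0; 1]; [:: 1; 1; 1; 1; 2; 1; 2; 1; 2;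 2; 1; 0; 2; 1; 1; 0; 0; 0; 1; 2; 2; 1; 1; 1; 2; 1]; [:: 0; 1; 2; 0; 1; 1; 0; 1; 2; 1; 1; 1; 0; 2; 2; 0; 1; 0; 2; 0; 1; 2; 2; 2; 1; 0]; [:: 1; 1; 2; 2; 2; 2; 0; 2; 0; 2; 1; 0; 0; 2; 0; 1; 0; 0; 2; 1; 0; 1; 0; 0; 2; 2]; [:: 1; 2; 0; 0; 2; 1; 2; 0; 2; 0; 1; 0; 2; 2; 2; 0; 0; 2; 1; 2; 1; 2; 2; 2; 1; 0]; [:: 2; 2; 0; 2; 2; 1; 2; 2; 1; 1; 1; 2; 2; 2; 1; 0; 1; 0; 1; 2; 0; 2; 0; 0; 2; 0]; [:: 1; 1; 1; 2; 0; 2; 0; 0; 2; 0; 1; 0; 1; 0; 2; 1; 0; 0; 1; 2; 0; 2; 0; 0; 0; 1]; [:: 0; 0; 1; 1; 2; 2; 0; 1; 1; 2; 0; 1; 2; 2; 1; 2; 2; 0; 2; 1; 2; 1; 2; 0; 2; 1]; [:: 0; 1; 0; 1; 1; 1; 0; 0; 1; 0; 1; 0; 1; 1; 2; 1; 1; 1; 1; 0; 2; 0; 0; 1; 1; 0]].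
Definition N26 : seq (seq nat) := [:: [:: 2; 2; 2; 2; 0; 2; 1; 1; 2; 2; 2; 1; 2; 2; 1; 0; 2; 1; 0; 1; 1; 0; 2; 2; 1; 2]; [:: 2; 2; 2; 1; 1; 1; 1; 1; 1; 0; 1; 0; 0; 0; 0; 1; 2; 2; 0; 0; 2; 0; 0; 1; 2; 0]; [:: 2; 2; 2; 0; 0; 0; 1; 0; 0; 0; 0; 0; 1; 2; 1; 2; 0; 2; 2; 2; 1; 1; 0; 2; 1; 1]; [:: 2; 1; 0; 1; 1; 2; 2; 2; 1; 1; 2; 2; 2; 0; 1; 0; 1; 0; 2; 0; 0; 0; 0; 1; 1; 1]; [:: 0; 1; 0; 1; 1; 0; 1; 2; 2; 0; 1; 2; 1; 2; 2; 1; 2; 2; 0; 0; 1; 2; 0; 1; 2; 0]; [:: 2; 1; 0; 2; 0; 2; 0; 1; 0; 1; 2; 1; 2; 0; 2; 2; 1; 1; 1; 1; 0; 0; 1; 2; 0; 1]; [:: 1; 1; 1; 2; 1; 0; 0; 0; 0; 2; 0; 0; 1; 1; 1; 0; 2; 2; 2; 2; 0; 0; 1; 0; 0; 0]; [:: 1; 1; 0; 2; 2; 1; 0; 2; 2; 1; 1; 1; 0; 2; 1; 1; 1; 0; 0; 2; 1; 1; 1; 2; 0; 1]; [:: 2; 1; 0; 1; 2; 0; 0; 2; 2; 2; 0; 0; 1; 1; 2; 0; 0; 2; 0; 0; 2; 1; 0; 1; 1; 2]; [:: 2; 0; 0; 1; 0; 1; 2; 1; 2; 1; 2; 2; 0;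 0; 0; 2; 0; 1; 1; 1; 1; 2; 1; 1; 1; 0]; [:: 2; 1; 0; 2; 1; 2; 0; 1; 0; 2; 2; 0; 0; 1; 1; 0; 0; 1; 2; 0; 2; 0; 2; 2; 1; 1]; [:: 1; 0; 0; 2; 2; 1; 0; 1; 0; 2; 0; 0; 1; 1; 0; 0; 2; 1; 2; 0; 0; 1; 1; 1; 1; 2]; [:: 2; 0; 1; 2; 1; 2; 1; 0; 1; 0; 0; 1; 0; 0; 0; 2; 1; 1; 2; 2; 2; 2; 2; 0; 2; 2]; [:: 2; 0; 2; 0; 2; 0; 1; 2; 1; 0; 1; 1; 0; 1; 0; 2; 1; 0; 1; 1; 0; 2; 1; 0; 2; 1]; [:: 1; 0; 1; 1; 2; 2; 1; 1; 2; 0; 1; 0; 0; 0; 1; 2; 2; 2; 0; 2; 0; 0; 0; 1; 2; 1]; [:: 0; 1; 2; 0; 1; 2; 0; 1; 0; 2; 0; 0; 2; 2; 2; 2; 2; 2; 0; 2; 0; 0; 2; 2; 0; 1]; [:: 2; 2; 0; 1; 2; 1; 2; 1; 0; 0; 0; 2; 1; 1; 2; 2; 2; 1; 2; 2; 1; 0; 1; 2; 1; 1]; [:: 1; 2; 2; 0; 2; 1; 2; 0; 2; 1; 1; 1; 1; 0; 2; 2; 1; 2; 0; 0; 1; 0; 0; 0; 2; 2]; [:: 0; 0; 2; 2; 0; 1; 2; 0; 0; 1; 2; 2; 2; 1; 0; 0; 2; 0; 0; 2; 1; 1; 1; 0; 2; 0]; [:: 1; 0; 2; 0; 0; 1; 2;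 2; 0; 1; 0; 0; 2; 1; 2; 2; 2; 0; 2; 2; 0; 0; 1; 2; 0; 2]; [:: 1; 2; 1; 0; 1; 0; 0; 1; 2; 1; 2; 0; 2; 0; 0; 0; 1; 1; 1; 0; 1; 2; 1; 1; 2; 2]; [:: 0; 0; 1; 0; 2; 0; 0; 1; 1; 2; 0; 1; 2; 2; 0; 0; 0; 0; 1; 0; 2; 1; 0; 2; 1; 2]; [:: 2; 0; 0; 0; 0; 1; 1; 1; 0; 1; 2; 1; 2; 1; 0; 2; 1; 0; 1; 1; 1; 0; 2; 0; 0; 0]; [:: 2; 1; 2; 1; 1; 2; 0; 2; 1; 1; 2; 1; 0; 0; 1; 2; 2; 0; 0; 2; 1; 2; 0; 0; 2; 2]; [:: 1; 2; 1; 1; 2; 0; 0; 0; 1; 1; 1; 1; 2; 2; 2; 0; 1; 2; 2; 0; 2; 1; 0; 2; 2; 2]; [:: 2; 0; 1; 1; 0; 1; 0; 1; 2; 0; 1; 2; 2; 1; 1; 1; 1; 2; 0; 2; 2; 2; 0; 2; 2; 2]].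
Definition x26 : seq nat := [:: 0; 0; 0; 0; 0; 0; 0; 0; 0; 0; 0; 0; 0; 0; 1; 0; 0; 0; 0; 0; 0; 0; 0; 0; 0; 0].

Definition A28 : seq (seq nat) := [:: [:: 1; 1; 2; 0; 0; 2; 2; 1; 2; 0; 1; 0; 0; 0; 1; 0; 0; 0; 0; 0; 0; 0; 1; 0; 0; 1; 0; 0]; [:: 1; 0; 1; 1; 1; 1; 1; 1; 1; 0; 2; 0; 0; 0; 0; 2; 2; 2; 0; 0; 1; 0; 0; 0; 1; 0; 0; 0]; [:: 2; 1; 2; 1; 0; 1; 0; 0; 0; 2; 1; 1; 0; 0; 0; 1; 2; 0; 1; 0; 0; 0; 2; 0; 0; 1; 0; 2]; [:: 0; 1; 1; 0; 0; 2; 0; 0; 2; 0; 2; 2; 0; 0; 2; 0; 0; 0; 2; 2; 2; 0; 0; 2; 0; 2; 0; 1]; [:: 0; 1; 0; 0; 1; 1; 0; 0; 2; 1; 0; 0; 1; 2; 2; 2; 2; 2; 2; 0; 0; 2; 2; 2; 0; 0; 2; 0]; [:: 2; 1; 1; 2; 1; 0; 0; 2; 0; 1; 0; 0; 0; 2; 0; 0; 0; 0; 1; 0; 2; 0; 0; 0; 1; 0; 2; 0]; [:: 2; 1; 0; 0; 0; 0; 1; 1; 0; 0; 0; 0; 2; 0; 0; 0; 1; 0; 0; 1; 0; 0; 2; 2; 2; 0; 1; 0]; [:: 1; 1; 0; 0; 0; 2; 1; 0; 0; 1; 1; 0; 2; 1; 0; 0; 1; 2; 2; 1; 0; 0; 0;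 1; 0; 0; 1; 2]; [:: 2; 1; 0; 2; 2; 0; 0; 0; 0; 0; 0; 2; 0; 0; 0; 0; 0; 1; 0; 0; 0; 0; 2; 2; 0; 0; 0; 0]; [:: 0; 0; 2; 0; 1; 1; 0; 1; 0; 0; 0; 2; 1; 0; 0; 0; 1; 2; 2; 0; 2; 0; 1; 0; 1; 0; 1; 1]; [:: 1; 2; 1; 2; 0; 0; 0; 1; 0; 0; 0; 0; 0; 0; 0; 0; 2; 0; 0; 1; 2; 0; 0; 0; 0; 2; 0; 1]; [:: 0; 0; 1; 2; 0; 0; 0; 0; 2; 2; 0; 0; 1; 0; 1; 0; 0; 0; 1; 0; 2; 1; 0; 0; 2; 1; 0; 1]; [:: 0; 0; 0; 0; 1; 0; 2; 2; 0; 1; 0; 1; 0; 1; 0; 0; 0; 0; 2; 1; 0; 0; 0; 0; 0; 2; 1; 1]; [:: 0; 0; 0; 0; 2; 2; 0; 1; 0; 0; 0; 0; 1; 1; 0; 0; 0; 2; 2; 2; 0; 0; 0; 2; 1; 0; 2; 1]; [:: 1; 0; 0; 2; 2; 0; 0; 0; 0; 0; 0; 1; 0; 0; 0; 1; 1; 1; 0; 1; 1; 2; 2; 2; 0; 0; 0; 0]; [:: 0; 2; 1; 0; 2; 0; 0; 0; 0; 0; 0; 0; 0; 0; 1; 2; 0; 1; 0; 0; 2; 0; 1; 1; 0; 0; 0; 1]; [:: 0; 2; 2; 0; 2; 0; 1; 1; 0; 1; 2; 0; 0; 0; 1; 0; 2; 1; 0; 0; 0; 0; 0; 0; 0; 1;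 2; 0]; [:: 0; 2; 0; 0; 2; 0; 0; 2; 1; 2; 0; 0; 0; 2; 1; 1; 1; 2; 0; 2; 2; 1; 0; 2; 0; 2; 0; 0]; [:: 0; 0; 1; 2; 2; 1; 0; 2; 0; 2; 0; 1; 2; 2; 0; 0; 0; 0; 2; 0; 0; 1; 0; 0; 2; 1; 0; 0]; [:: 0; 0; 0; 2; 0; 0; 1; 1; 0; 0; 1; 0; 1; 2; 1; 0; 0; 2; 0; 0; 0; 2; 0; 0; 0; 0; 2; 0]; [:: 0; 1; 0; 2; 0; 2; 0; 0; 0; 2; 2; 2; 0; 0; 1; 2; 0; 2; 0; 0; 2; 1; 1; 0; 2; 0; 0; 2]; [:: 0; 0; 0; 0; 2; 0; 0; 0; 0; 0; 0; 1; 0; 0; 2; 0; 0; 1; 1; 2; 1; 0; 0; 0; 0; 0; 0; 0]; [:: 1; 0; 2; 0; 2; 0; 2; 0; 2; 1; 0; 0; 0; 0; 2; 1; 0; 0; 0; 0; 1; 0; 1; 0; 2; 0; 1; 0]; [:: 0; 0; 0; 2; 2; 0; 2; 1; 2; 0; 0; 0; 0; 2; 2; 1; 0; 2; 0; 0; 0; 0; 0; 2; 2; 0; 0; 0]; [:: 0; 1; 0; 0; 0; 1; 2; 0; 0; 1; 0; 2; 0; 1; 0; 0; 0; 0; 2; 0; 2; 0; 2; 2; 1; 0; 1; 1]; [:: 1; 0; 1; 2; 0; 0; 0; 0; 0; 0; 2; 1; 2; 0; 0; 0; 1; 2; 1; 0; 0; 0; 0; 0; 0; 2; 0; 2]; [::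 0; 0; 0; 0; 2; 2; 1; 1; 0; 1; 0; 0; 1; 2; 0; 0; 2; 0; 0; 2; 0; 0; 1; 0; 1; 0; 0; 2]; [:: 0; 0; 2; 1; 0; 0; 0; 2; 0; 1; 1; 1; 1; 1; 0; 1; 0; 0; 0; 0; 2; 0; 0; 0; 1; 2; 2; 0]].
Definition Ai28 : seq (seq nat) := [:: [:: 0; 2; 1; 0; 1; 0; 2; 0; 1; 2; 1; 2; 0; 1; 1; 0; 1; 0; 2; 1; 2; 0; 0; 2; 1; 1; 0; 1]; [:: 2; 2; 0; 1; 0; 1; 0; 0; 1; 1; 2; 0; 1; 0; 2; 2; 0; 2; 1; 2; 1; 1; 0; 1; 1; 0; 1; 0]; [:: 1; 0; 0; 0; 2; 1; 1; 1; 2; 0; 1; 0; 1; 2; 1; 0; 2; 0; 0; 1; 1; 0; 1; 2; 0; 2; 0; 2]; [:: 0; 1; 0; 1; 1; 1; 0; 0; 2; 0; 2; 2; 2; 2; 0; 2; 2; 1; 1; 1; 1; 0; 1; 0; 1; 2; 0; 0]; [:: 1; 0; 2; 1; 1; 0; 2; 1; 1; 1; 1; 1; 1; 2; 1; 2; 2; 2; 2; 1; 1; 1; 2; 2; 0; 2; 0; 1]; [:: 0; 1; 1; 1; 0; 2; 1; 0; 1; 0; 1; 1; 0; 2; 0; 2; 2; 0; 1; 1; 2; 2; 2; 0; 0; 1; 0; 2]; [:: 2; 0; 1; 0; 2; 1; 2; 2; 1; 2; 1; 2; 1; 0; 2; 2; 0; 0; 2; 2; 2; 2; 2; 1; 2;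 2; 0; 0]; [:: 0; 0; 1; 0; 1; 0; 2; 1; 0; 2; 1; 2; 0; 2; 0; 1; 0; 2; 2; 1; 2; 2; 1; 1; 0; 0; 1; 2]; [:: 1; 1; 2; 2; 1; 1; 1; 0; 2; 1; 1; 1; 1; 1; 2; 0; 0; 2; 1; 1; 0; 2; 1; 2; 2; 0; 1; 2]; [:: 2; 1; 0; 0; 1; 0; 2; 2; 1; 1; 0; 2; 0; 0; 0; 2; 2; 1; 0; 0; 1; 0; 0; 0; 2; 1; 0; 1]; [:: 1; 2; 1; 2; 1; 1; 1; 1; 1; 0; 1; 2; 0; 2; 2; 0; 0; 1; 1; 0; 2; 0; 0; 0; 0; 0; 0; 1]; [:: 2; 0; 0; 2; 1; 1; 2; 2; 1; 2; 2; 2; 2; 2; 1; 0; 1; 0; 0; 1; 1; 2; 0; 2; 0; 0; 0; 2]; [:: 0; 1; 1; 2; 1; 0; 1; 0; 1; 0; 0; 2; 1; 0; 0; 2; 1; 1; 2; 1; 0; 1; 2; 1; 1; 0; 1; 2]; [:: 1; 0; 2; 2; 2; 2; 0; 2; 1; 0; 2; 2; 0; 2; 1; 0; 1; 0; 2; 0; 2; 0; 0; 2; 1; 2; 1; 2]; [:: 1; 2; 1; 0; 1; 0; 2; 0; 2; 0; 2; 1; 0; 1; 2; 2; 0; 0; 1; 2; 0; 2; 2; 0; 0; 2; 0; 0]; [:: 0; 2; 0; 2; 2; 2; 2; 1; 0; 2; 0; 0; 2; 0; 2; 1; 1; 1; 2; 1; 2; 0; 1; 1; 1; 1; 1; 0];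 [:: 1; 0; 2; 2; 2; 2; 0; 0; 0; 2; 0; 1; 1; 1; 0; 1; 2; 1; 1; 2; 1; 1; 0; 1; 0; 0; 2; 0]; [:: 0; 2; 0; 1; 2; 0; 0; 2; 2; 1; 1; 0; 1; 0; 0; 1; 1; 1; 2; 0; 2; 2; 1; 2; 1; 2; 0; 0]; [:: 2; 1; 0; 1; 2; 1; 2; 2; 1; 0; 1; 0; 2; 2; 1; 2; 1; 2; 2; 0; 2; 2; 1; 0; 2; 2; 1; 0]; [:: 1; 2; 1; 1; 1; 1; 2; 1; 1; 0; 0; 1; 1; 0; 2; 1; 2; 0; 0; 0; 2; 1; 1; 0; 1; 1; 0; 2]; [:: 2; 1; 1; 1; 1; 2; 2; 2; 0; 1; 2; 1; 0; 2; 0; 2; 1; 2; 2; 2; 1; 2; 0; 1; 1; 1; 2; 1]; [:: 0; 1; 0; 0; 1; 2; 2; 2; 2; 0; 0; 2; 1; 0; 2; 0; 1; 2; 2; 1; 2; 1; 2; 1; 1; 2; 1; 0]; [:: 0; 0; 1; 1; 2; 2; 2; 1; 1; 0; 0; 0; 2; 0; 2; 1; 0; 1; 1; 1; 0; 2; 0; 1; 1; 0; 0; 1]; [:: 2; 1; 2; 0; 2; 0; 1; 1; 2; 0; 0; 2; 1; 2; 0; 1; 1; 2; 0; 0; 1; 1; 1; 2; 2; 0; 1; 1]; [:: 1; 1; 0; 1; 0; 0; 2; 0; 2; 2; 0; 0; 1; 1; 0; 1; 0; 1; 2; 1; 1; 1; 1; 2; 1; 1; 2; 2]; [:: 1; 0;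 2; 2; 2; 1; 2; 0; 0; 1; 0; 0; 0; 2; 2; 1; 0; 2; 2; 1; 1; 2; 0; 0; 1; 2; 2; 1]; [:: 0; 1; 0; 0; 0; 0; 0; 1; 1; 0; 0; 0; 1; 1; 0; 1; 2; 0; 1; 0; 2; 1; 0; 1; 2; 2; 0; 0]; [:: 1; 0; 2; 0; 1; 2; 0; 2; 2; 1; 1; 2; 2; 2; 0; 0; 0; 0; 0; 2; 1; 0; 1; 1; 2; 1; 0; 1]].
Definition N28 : seq (seq nat) := [:: [:: 2; 1; 2; 1; 0; 0; 1; 2; 1; 0; 2; 2; 0; 1; 0; 0; 0; 2; 2; 2; 1; 1; 1; 1; 1; 1; 2; 2]; [:: 1; 0; 0; 0; 0; 0; 0; 2; 1; 0; 2; 0; 2; 0; 2; 1; 0; 0; 0; 0; 2; 2; 2; 2; 2; 2; 1; 2]; [:: 2; 0; 0; 2; 0; 1; 1; 1; 1; 0; 2; 2; 0; 1; 0; 1; 1; 1; 2; 2; 2; 2; 2; 2; 1; 1; 1; 2]; [:: 1; 0; 2; 1; 2; 2; 2; 0; 2; 1; 0; 2; 1; 0; 0; 2; 1; 0; 0; 0; 2; 1; 1; 0; 1; 2; 2; 1]; [:: 0; 0; 0; 2; 2; 0; 1; 0; 1; 1; 1; 1; 1; 1; 1; 2; 1; 0; 1; 1; 0; 1; 2; 1; 1; 0; 2; 1]; [:: 0; 0; 1; 2; 0; 0; 1; 2; 2; 1; 0; 1; 2; 1; 1; 2; 1; 1; 1; 0; 0; 2; 0; 2; 1; 1; 2; 1];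 [:: 1; 0; 1; 2; 1; 1; 0; 0; 2; 2; 2; 2; 0; 0; 2; 1; 0; 1; 2; 1; 0; 0; 2; 2; 2; 0; 1; 2]; [:: 2; 2; 1; 0; 0; 2; 0; 2; 0; 1; 0; 0; 1; 1; 2; 2; 2; 2; 0; 0; 1; 1; 0; 1; 0; 1; 1; 1]; [:: 1; 1; 1; 2; 1; 2; 2; 0; 2; 0; 2; 1; 2; 2; 1; 1; 0; 0; 2; 2; 2; 0; 1; 0; 0; 0; 2; 2]; [:: 0; 0; 0; 1; 1; 1; 2; 1; 0; 2; 2; 1; 1; 2; 2; 0; 0; 1; 2; 2; 0; 0; 1; 2; 0; 2; 2; 1]; [:: 2; 2; 2; 0; 1; 0; 2; 0; 2; 2; 1; 0; 0; 0; 0; 0; 0; 2; 0; 2; 0; 2; 0; 0; 1; 1; 0; 0]; [:: 2; 0; 2; 2; 1; 1; 2; 0; 1; 1; 0; 1; 2; 2; 2; 2; 1; 2; 0; 2; 0; 1; 2; 1; 2; 1; 0; 1]; [:: 0; 2; 0; 1; 1; 2; 0; 1; 2; 1; 0; 2; 1; 1; 1; 2; 2; 2; 1; 1; 2; 0; 0; 0; 2; 0; 1; 1]; [:: 1; 0; 1; 0; 1; 1; 0; 1; 2; 2; 0; 2; 1; 0; 1; 2; 2; 0; 1; 1; 1; 2; 0; 2; 1; 1; 2; 2]; [:: 0; 2; 0; 0; 1; 1; 2; 2; 1; 2; 0; 2; 1; 1; 0; 1; 1; 0; 0; 0; 2; 0; 0; 2; 0; 2; 1; 2]; [:: 0; 1;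 1; 2; 2; 2; 1; 2; 1; 0; 0; 2; 2; 2; 1; 2; 2; 2; 1; 0; 0; 0; 0; 0; 0; 1; 1; 1]; [:: 0; 0; 1; 1; 1; 1; 0; 2; 0; 0; 0; 1; 2; 2; 1; 2; 2; 2; 1; 1; 1; 1; 2; 1; 2; 2; 2; 0]; [:: 2; 0; 1; 0; 0; 1; 1; 2; 0; 1; 2; 2; 2; 0; 0; 2; 2; 1; 1; 2; 0; 0; 0; 1; 1; 0; 0; 1]; [:: 2; 0; 2; 0; 1; 1; 2; 0; 2; 2; 0; 0; 1; 1; 0; 1; 1; 1; 2; 1; 0; 1; 1; 2; 0; 0; 0; 0]; [:: 2; 0; 2; 0; 1; 0; 1; 0; 2; 2; 2; 2; 1; 1; 0; 0; 1; 2; 1; 1; 0; 2; 0; 2; 2; 2; 1; 0]; [:: 1; 2; 2; 2; 0; 0; 0; 1; 2; 0; 0; 0; 2; 1; 2; 0; 1; 0; 0; 0; 0; 0; 2; 0; 2; 0; 1; 2]; [:: 1; 2; 2; 1; 1; 2; 0; 1; 0; 0; 2; 1; 0; 2; 0; 0; 1; 0; 1; 2; 0; 0; 0; 0; 1; 0; 0; 0]; [:: 1; 2; 2; 1; 2; 0; 2; 0; 1; 1; 0; 2; 0; 0; 0; 0; 2; 0; 1; 0; 2; 0; 1; 1; 2; 2; 1; 2]; [:: 1; 2; 2; 0; 1; 2; 2; 1; 0; 2; 0; 1; 0; 2; 2; 0; 1; 1; 2; 2; 0; 0; 1; 2; 1; 2; 1; 0]; [:: 1; 2; 1; 1; 1;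 1; 2; 0; 0; 0; 1; 2; 2; 1; 0; 0; 2; 1; 0; 2; 2; 1; 2; 1; 0; 0; 1; 0]; [:: 1; 2; 1; 2; 0; 1; 0; 1; 0; 2; 1; 1; 0; 1; 2; 1; 2; 0; 0; 2; 0; 0; 2; 2; 0; 2; 0; 0]; [:: 2; 1; 1; 2; 2; 2; 1; 1; 2; 2; 0; 0; 1; 2; 1; 1; 2; 0; 0; 1; 1; 0; 1; 1; 1; 0; 1; 0]; [:: 2; 2; 2; 1; 1; 1; 2; 1; 2; 1; 0; 1; 1; 2; 2; 1; 0; 1; 0; 0; 2; 0; 2; 0; 0; 0; 0; 1]].
Definition x28 : seq nat := [:: 0; 0; 0; 0; 0; 0; 0; 0; 0; 0; 0; 0; 0; 0; 0; 0; 0; 0; 0; 0; 0; 1; 0; 0; 0; 0; 0; 0].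

Definition A30 : seq (seq nat) := [:: [:: 0; 0; 1; 0; 0; 0; 0; 1; 0; 2; 1; 2; 2; 2; 1; 0; 2; 1; 1; 1; 1; 2; 0; 0; 0; 0; 0; 2; 0; 0]; [:: 0; 0; 0; 1; 1; 0; 0; 2; 1; 0; 1; 0; 0; 0; 0; 1; 2; 0; 0; 2; 0; 0; 0; 0; 2; 2; 0; 0; 0; 1]; [:: 1; 0; 0; 0; 0; 0; 2; 0; 2; 1; 2; 2; 0; 0; 0; 1; 0; 0; 0; 0; 0; 1; 1; 1; 2; 2; 0; 1; 0; 0]; [:: 0; 1; 0; 2; 0; 2; 1; 2; 2; 0; 0; 2; 1; 2; 1; 0; 0; 2; 0; 0; 0; 1; 2; 1; 1; 0; 0; 0; 0; 0]; [:: 0; 1; 0; 0; 1; 0; 0; 0; 2; 0; 0; 0; 0; 0; 0; 0; 2; 0; 2; 0; 1; 0; 0; 0; 0; 0; 0; 0; 0; 2]; [:: 0; 0; 0; 2; 0; 0; 0; 1; 0; 0; 0; 0; 0; 2; 0; 2; 1; 2; 0; 0; 1; 0; 2; 0; 0; 1; 2; 0; 1; 1]; [:: 0; 0; 2; 1; 0; 0; 0; 2; 0; 2; 0; 2; 2; 2; 0; 0; 2; 0; 0; 0; 2; 0; 2; 0; 0; 0; 0; 0; 0; 0]; [:: 1; 2; 0; 2; 0; 1; 2; 1; 2; 0; 0; 2; 2; 0; 0; 0; 0; 1; 0; 1; 2; 2; 0; 0; 0; 1; 2; 0; 1; 0]; [:: 0; 1; 2; 2; 2; 0; 0; 2; 0;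 1; 0; 0; 1; 1; 1; 0; 2; 2; 2; 0; 1; 2; 0; 1; 2; 0; 0; 0; 0; 0]; [:: 2; 0; 1; 0; 0; 0; 2; 0; 1; 2; 2; 1; 0; 0; 1; 0; 0; 2; 0; 0; 0; 0; 1; 0; 0; 2; 0; 0; 0; 0]; [:: 1; 1; 2; 0; 0; 0; 0; 0; 0; 2; 1; 2; 1; 0; 0; 1; 0; 1; 2; 0; 0; 0; 0; 1; 0; 0; 0; 0; 2; 0]; [:: 2; 0; 2; 2; 0; 0; 2; 2; 0; 1; 2; 2; 0; 0; 0; 2; 1; 0; 0; 1; 2; 2; 1; 0; 0; 0; 0; 0; 0; 1]; [:: 2; 0; 0; 1; 0; 0; 2; 2; 1; 0; 1; 0; 0; 0; 1; 1; 0; 0; 1; 0; 0; 1; 0; 1; 2; 0; 2; 1; 0; 1]; [:: 2; 0; 0; 2; 0; 2; 2; 0; 1; 0; 0; 0; 0; 0; 1; 0; 1; 0; 0; 0; 0; 0; 1; 1; 0; 0; 2; 2; 0; 0]; [:: 1; 0; 0; 1; 0; 0; 0; 0; 1; 1; 0; 0; 1; 1; 0; 0; 0; 2; 2; 1; 1; 2; 0; 1; 1; 1; 1; 0; 0; 2]; [:: 0; 1; 1; 0; 0; 2; 0; 0; 0; 0; 1; 2; 1; 0; 0; 1; 1; 0; 2; 0; 1; 0; 0; 0; 2; 0; 0; 0; 2; 0]; [:: 2; 2; 0; 0; 2; 1; 2; 0; 2; 0; 0; 1; 0; 1; 0; 1; 0; 0; 2; 1; 1; 1; 0; 0; 0;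 0; 0; 0; 0; 0]; [:: 1; 0; 0; 2; 0; 2; 0; 1; 2; 2; 1; 0; 0; 0; 2; 0; 0; 0; 0; 0; 2; 0; 0; 2; 0; 1; 2; 1; 0; 0]; [:: 1; 0; 0; 0; 2; 0; 0; 0; 2; 0; 2; 0; 1; 0; 2; 2; 2; 0; 0; 0; 0; 1; 1; 0; 2; 2; 1; 1; 0; 0]; [:: 1; 2; 0; 0; 0; 0; 0; 1; 0; 0; 0; 1; 0; 0; 1; 0; 1; 0; 0; 0; 0; 0; 0; 0; 2; 1; 0; 0; 1; 1]; [:: 1; 0; 0; 0; 1; 1; 2; 2; 1; 0; 0; 2; 0; 0; 1; 1; 1; 2; 0; 0; 2; 0; 1; 1; 2; 1; 0; 2; 1; 0]; [:: 2; 0; 1; 1; 0; 0; 0; 2; 2; 0; 0; 2; 1; 0; 2; 0; 1; 0; 1; 0; 0; 0; 0; 2; 0; 0; 1; 2; 2; 2]; [:: 0; 0; 1; 2; 0; 2; 2; 0; 0; 1; 0; 1; 0; 1; 0; 0; 0; 0; 1; 0; 1; 0; 0; 0; 1; 0; 2; 2; 2; 0]; [:: 0; 0; 1; 1; 0; 0; 0; 0; 1; 0; 1; 0; 1; 1; 1; 0; 0; 2; 0; 0; 1; 2; 0; 0; 2; 0; 0; 0; 2; 0]; [:: 0; 2; 2; 1; 0; 0; 0; 0; 2; 0; 0; 0; 2; 0; 1; 2; 0; 0; 2; 2; 2; 0; 1; 2; 2; 0; 0; 0; 1; 2]; [:: 0; 2; 2; 0; 0; 1; 0; 1; 0; 2;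 0; 0; 0; 0; 1; 0; 0; 1; 2; 1; 1; 0; 0; 0; 0; 0; 0; 0; 0; 0]; [:: 0; 0; 0; 0; 0; 2; 0; 2; 0; 0; 0; 0; 2; 2; 1; 0; 0; 2; 1; 0; 0; 1; 2; 0; 0; 0; 0; 0; 0; 0]; [:: 2; 0; 1; 0; 0; 0; 0; 0; 0; 0; 0; 0; 1; 2; 0; 0; 0; 1; 1; 0; 2; 2; 2; 0; 0; 0; 0; 0; 0; 0]; [:: 0; 0; 0; 0; 0; 1; 0; 1; 0; 0; 2; 0; 0; 0; 0; 2; 0; 0; 0; 1; 1; 2; 2; 2; 1; 0; 0; 0; 0; 1]; [:: 0; 1; 0; 0; 2; 1; 0; 0; 0; 0; 0; 1; 1; 0; 2; 0; 0; 0; 0; 1; 0; 2; 0; 0; 2; 0; 0; 0; 1; 1]].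
Definition Ai30 : seq (seq nat) := [:: [:: 2; 2; 0; 1; 2; 1; 1; 2; 1; 1; 1; 0; 1; 1; 0; 0; 1; 2; 0; 1; 0; 2; 1; 1; 2; 1; 0; 2; 2; 2]; [:: 2; 1; 0; 1; 2; 2; 2; 1; 0; 2; 2; 1; 2; 2; 1; 1; 0; 0; 0; 2; 0; 2; 2; 1; 0; 2; 0; 0; 0; 0]; [:: 0; 0; 0; 1; 2; 0; 2; 1; 0; 2; 2; 2; 1; 1; 1; 1; 1; 1; 2; 2; 2; 1; 0; 0; 1; 2; 2; 0; 2; 1]; [:: 1; 1; 1; 0; 2; 2; 0; 0; 2; 0; 2; 0; 2; 2; 0; 0; 2; 1; 1; 1; 2; 0; 0; 1; 1; 2; 0; 2; 0; 0]; [:: 2; 2; 2; 2; 1; 0; 0; 0; 0; 1; 1; 2; 0; 1; 0; 1; 2; 2; 0; 1; 2; 1; 1; 0; 2; 2; 1; 1; 0; 2]; [:: 1; 2; 0; 2; 0; 0; 1; 1; 0; 0; 0; 2; 0; 0; 2; 0; 1; 1; 2; 2; 1; 1; 0; 0; 0; 1; 0; 2; 0; 0]; [:: 1; 2; 2; 0; 0; 1; 0; 2; 0; 0; 2; 2; 1; 1; 2; 0; 1; 2; 1; 0; 1; 2; 1; 1; 1; 2; 1; 2; 1; 1]; [:: 2; 1; 1; 0; 0; 1; 2; 0; 2; 0; 0; 0; 0; 2; 1; 1; 0; 2; 0; 2; 2; 2; 1; 2; 0; 2; 0; 1; 1; 1]; [:: 1; 0; 0; 2; 0; 0; 0; 2;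 1; 1; 1; 0; 1; 2; 2; 1; 2; 0; 1; 1; 0; 2; 0; 0; 2; 0; 0; 2; 2; 2]; [:: 1; 2; 2; 0; 1; 0; 0; 0; 1; 0; 0; 1; 0; 2; 1; 0; 0; 1; 1; 1; 2; 0; 2; 1; 0; 1; 2; 2; 1; 0]; [:: 1; 2; 2; 2; 1; 0; 2; 0; 1; 0; 1; 2; 1; 0; 2; 2; 2; 0; 0; 0; 2; 1; 2; 0; 2; 2; 1; 1; 2; 2]; [:: 0; 1; 2; 0; 2; 2; 2; 0; 0; 1; 2; 2; 2; 0; 2; 1; 0; 1; 1; 0; 0; 1; 2; 0; 2; 2; 1; 2; 1; 2]; [:: 1; 2; 1; 2; 0; 0; 1; 0; 1; 0; 1; 2; 2; 1; 0; 2; 0; 0; 1; 0; 1; 0; 1; 0; 2; 2; 2; 2; 1; 1]; [:: 1; 2; 1; 2; 1; 0; 1; 2; 2; 2; 0; 0; 1; 0; 2; 1; 1; 1; 2; 1; 1; 0; 0; 0; 1; 0; 0; 0; 1; 2]; [:: 0; 1; 1; 0; 0; 2; 2; 1; 2; 1; 2; 2; 0; 2; 0; 2; 0; 1; 0; 1; 1; 1; 1; 0; 1; 0; 1; 1; 2; 0]; [:: 0; 1; 1; 0; 1; 0; 0; 1; 1; 0; 2; 1; 2; 1; 2; 1; 1; 0; 1; 1; 2; 1; 0; 1; 0; 0; 1; 1; 1; 1]; [:: 1; 0; 1; 2; 2; 1; 1; 0; 2; 0; 2; 0; 0; 1; 0; 1; 1; 2; 1; 0; 2; 0; 0; 2;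 2; 0; 0; 0; 0; 0]; [:: 2; 0; 1; 1; 2; 1; 2; 2; 0; 1; 0; 1; 0; 1; 1; 0; 2; 2; 0; 2; 0; 1; 2; 1; 2; 1; 1; 2; 2; 0]; [:: 0; 0; 2; 1; 0; 2; 1; 0; 1; 1; 0; 1; 1; 2; 0; 1; 1; 0; 2; 2; 1; 1; 1; 2; 0; 0; 1; 0; 1; 0]; [:: 1; 2; 2; 1; 1; 2; 0; 2; 1; 1; 0; 0; 0; 1; 1; 1; 0; 2; 2; 1; 2; 0; 2; 1; 1; 2; 0; 1; 2; 2]; [:: 0; 0; 2; 2; 2; 1; 1; 2; 0; 2; 2; 0; 1; 1; 1; 2; 2; 0; 1; 2; 2; 2; 2; 0; 0; 0; 0; 1; 0; 1]; [:: 2; 2; 1; 0; 1; 1; 2; 2; 2; 0; 1; 1; 0; 0; 1; 1; 0; 1; 1; 0; 2; 2; 0; 0; 0; 2; 1; 0; 1; 2]; [:: 1; 2; 0; 0; 1; 0; 1; 1; 0; 2; 2; 2; 1; 0; 1; 0; 0; 2; 1; 2; 2; 0; 1; 2; 2; 2; 2; 0; 2; 1]; [:: 1; 1; 0; 1; 0; 0; 1; 2; 0; 1; 0; 0; 0; 0; 0; 1; 2; 1; 2; 1; 0; 0; 2; 2; 2; 1; 0; 0; 0; 0]; [:: 2; 0; 1; 1; 2; 0; 1; 0; 2; 0; 2; 2; 2; 1; 1; 0; 2; 2; 0; 1; 0; 0; 2; 2; 1; 1; 2; 0; 1; 1]; [:: 1; 2; 2; 2; 2; 1; 2; 2; 0;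 1; 2; 2; 2; 0; 0; 0; 0; 1; 0; 2; 0; 2; 2; 1; 1; 2; 1; 2; 1; 1]; [:: 0; 0; 2; 0; 1; 0; 1; 0; 0; 2; 1; 1; 2; 0; 1; 1; 0; 1; 1; 0; 0; 1; 2; 0; 2; 1; 2; 0; 2; 0]; [:: 2; 0; 0; 2; 1; 2; 2; 1; 2; 2; 1; 2; 2; 0; 1; 1; 0; 2; 0; 1; 1; 0; 0; 0; 0; 2; 0; 1; 1; 0]; [:: 2; 0; 2; 0; 0; 0; 1; 1; 2; 1; 2; 1; 1; 1; 2; 1; 0; 2; 1; 2; 0; 1; 2; 0; 1; 1; 2; 1; 0; 0]; [:: 2; 0; 1; 0; 2; 0; 1; 1; 2; 0; 2; 2; 1; 2; 0; 1; 0; 0; 0; 2; 1; 2; 1; 0; 1; 1; 0; 0; 0; 1]].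
Definition N30 : seq (seq nat) := [:: [:: 1; 1; 0; 1; 2; 1; 1; 1; 1; 0; 2; 1; 1; 1; 2; 1; 1; 2; 2; 1; 0; 2; 0; 2; 2; 1; 2; 0; 2; 2]; [:: 1; 1; 0; 2; 0; 0; 2; 0; 0; 0; 2; 0; 0; 1; 0; 2; 0; 1; 2; 1; 2; 0; 0; 0; 1; 0; 0; 1; 2; 2]; [:: 0; 0; 2; 2; 2; 0; 2; 1; 2; 2; 0; 0; 0; 2; 0; 0; 1; 2; 1; 0; 0; 0; 0; 2; 1; 2; 1; 0; 0; 1]; [:: 1; 2; 2; 2; 0; 2; 1; 2; 1; 1; 0; 0; 0; 2; 2; 1; 0; 0; 2; 1; 2; 1; 0; 1; 2; 0; 1; 1; 0; 1]; [:: 2; 0; 2; 0; 2; 1; 0; 0; 0; 1; 1; 2; 1; 1; 1; 2; 2; 0; 0; 1; 1; 1; 2; 1; 2; 2; 0; 1; 2; 1]; [:: 1; 0; 0; 2; 1; 2; 1; 0; 2; 0; 2; 2; 1; 0; 2; 1; 1; 2; 0; 1; 0; 0; 1; 0; 0; 1; 1; 0; 2; 1]; [:: 1; 2; 2; 1; 0; 1; 0; 2; 2; 0; 1; 0; 0; 1; 2; 2; 0; 0; 0; 1; 1; 2; 1; 1; 0; 2; 1; 1; 0; 1]; [:: 1; 0; 1; 2; 0; 0; 2; 1; 1; 1; 1; 0; 1; 0; 2; 1; 1; 0; 2; 1; 0; 0; 2; 0; 0; 0; 1; 0; 2; 2]; [:: 1; 0; 2; 1; 0; 2; 2; 1; 2;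 1; 0; 2; 2; 0; 2; 2; 0; 1; 0; 1; 0; 1; 2; 1; 2; 1; 0; 1; 0; 1]; [:: 0; 0; 2; 1; 1; 0; 0; 1; 1; 0; 2; 2; 1; 2; 0; 1; 0; 0; 2; 1; 2; 2; 0; 1; 2; 1; 0; 0; 1; 2]; [:: 2; 2; 0; 0; 1; 2; 1; 1; 0; 2; 1; 1; 2; 0; 0; 0; 0; 2; 2; 1; 2; 0; 2; 0; 0; 0; 1; 2; 2; 0]; [:: 1; 0; 0; 0; 2; 2; 0; 0; 2; 2; 1; 2; 1; 1; 2; 1; 0; 0; 0; 1; 1; 2; 2; 0; 1; 2; 0; 0; 0; 2]; [:: 1; 0; 0; 0; 1; 1; 0; 1; 2; 1; 2; 1; 0; 1; 2; 1; 0; 1; 0; 0; 2; 0; 0; 0; 1; 0; 2; 0; 0; 0]; [:: 1; 1; 2; 2; 1; 0; 1; 0; 0; 2; 0; 1; 1; 0; 0; 1; 0; 0; 0; 0; 1; 0; 0; 1; 1; 1; 1; 2; 0; 1]; [:: 2; 0; 0; 2; 1; 2; 2; 2; 2; 0; 0; 2; 2; 0; 1; 1; 2; 2; 2; 2; 1; 0; 0; 0; 2; 2; 0; 2; 0; 1]; [:: 1; 2; 0; 1; 2; 1; 2; 1; 2; 1; 0; 1; 1; 1; 1; 1; 0; 1; 1; 1; 1; 1; 0; 1; 1; 1; 1; 0; 1; 0]; [:: 1; 0; 1; 0; 2; 1; 0; 1; 0; 0; 0; 0; 0; 0; 2; 0; 2; 2; 1; 1; 2; 1; 0; 0; 0;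 0; 1; 2; 0; 2]; [:: 2; 1; 2; 0; 0; 2; 0; 0; 1; 0; 2; 0; 1; 0; 2; 1; 2; 2; 0; 1; 2; 2; 1; 2; 2; 1; 0; 1; 1; 2]; [:: 2; 2; 1; 2; 0; 0; 0; 2; 0; 2; 2; 0; 0; 0; 2; 1; 1; 0; 0; 1; 0; 1; 2; 2; 0; 1; 1; 1; 2; 0]; [:: 1; 1; 0; 1; 1; 1; 1; 1; 1; 1; 1; 1; 0; 0; 2; 1; 1; 1; 1; 1; 0; 1; 0; 0; 0; 0; 0; 1; 1; 1]; [:: 0; 2; 0; 2; 1; 0; 1; 0; 0; 2; 2; 1; 2; 1; 1; 1; 2; 2; 0; 0; 1; 1; 0; 1; 1; 2; 0; 2; 1; 0]; [:: 2; 0; 0; 1; 1; 0; 2; 0; 1; 2; 0; 2; 0; 0; 0; 1; 1; 2; 1; 1; 1; 2; 1; 0; 1; 1; 1; 0; 0; 1]; [:: 0; 0; 0; 0; 2; 1; 1; 2; 2; 0; 2; 2; 0; 0; 0; 0; 0; 1; 2; 0; 0; 1; 2; 0; 0; 1; 2; 2; 0; 2]; [:: 2; 0; 2; 1; 1; 0; 1; 0; 1; 1; 0; 0; 0; 1; 0; 1; 0; 2; 2; 0; 1; 0; 0; 2; 1; 0; 1; 2; 1; 0]; [:: 2; 1; 1; 2; 2; 0; 0; 0; 2; 2; 0; 1; 1; 1; 2; 1; 0; 2; 0; 0; 1; 1; 0; 1; 0; 1; 0; 2; 0; 2]; [:: 1; 0; 2; 0; 2; 1; 2; 0; 1; 1;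 0; 2; 0; 1; 2; 1; 0; 1; 1; 0; 2; 1; 1; 0; 1; 0; 2; 2; 1; 1]; [:: 2; 0; 1; 1; 0; 1; 1; 1; 0; 0; 1; 0; 2; 1; 0; 1; 1; 0; 1; 0; 0; 1; 2; 1; 0; 2; 1; 2; 0; 1]; [:: 0; 1; 0; 1; 1; 0; 1; 0; 1; 0; 2; 0; 0; 2; 2; 0; 2; 1; 1; 1; 2; 0; 2; 2; 2; 2; 2; 1; 2; 1]; [:: 2; 2; 0; 0; 2; 2; 0; 2; 0; 1; 2; 0; 0; 0; 0; 1; 0; 1; 2; 1; 1; 0; 0; 1; 0; 1; 0; 2; 0; 1]; [:: 2; 2; 1; 1; 1; 1; 1; 2; 1; 2; 0; 2; 0; 1; 1; 0; 2; 2; 0; 1; 0; 1; 2; 0; 2; 1; 1; 1; 1; 1]].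
Definition x30 : seq nat := [:: 0; 0; 0; 0; 1; 0; 0; 0; 0; 0; 0; 0; 0; 0; 0; 0; 0; 0; 0; 0; 0; 0; 0; 0; 0; 0; 0; 0; 0; 0].


Lemma base16 : Pgen 5 (mx_of 16 A16) /\ Pwit 5 (mx_of 16 A16).
Proof.
apply: (@base 16 2 5 A16 Ai16 N16 x16); vm_compute; reflexivity.
Qed.

Lemma base18 : Pgen 6 (mx_of 18 A18) /\ Pwit 6 (mx_of 18 A18).
Proof.
apply: (@base 18 2 6 A18 Ai18 N18 x18); vm_compute; reflexivity.
Qed.

Lemma base20 : Pgen 6 (mx_of 20 A20) /\ Pwit 6 (mx_of 20 A20).
Proof.
apply: (@base 20 2 6 A20 Ai20 N20 x20); vm_compute; reflexivity.
Qed.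

Lemma base22 : Pgen 7 (mx_of 22 A22) /\ Pwit 7 (mx_of 22 A22).
Proof.
apply: (@base 22 3 7 A22 Ai22 N22 x22); vm_compute; reflexivity.
Qed.

Lemma base24 : Pgen 7 (mx_of 24 A24) /\ Pwit 7 (mx_of 24 A24).
Proof.
apply: (@base 24 3 7 A24 Ai24 N24 x24); vm_compute; reflexivity.
Qed.

Lemma base26 : Pgen 7 (mx_of 26 A26) /\ Pwit 7 (mx_of 26 A26).
Proof.
apply: (@base 26 3 7 A26 Ai26 N26 x26); vm_compute; reflexivity.
Qed.

Lemma base28 : Pgen 8 (mx_of 28 A28) /\ Pwit 8 (mx_of 28 A28).
Proof.
apply: (@base 28 3 8 A28 Ai28 N28 x28); vm_compute; reflexivity.
Qed.

Lemma base30 : Pgen 8 (mx_of 30 A30) /\ Pwit 8 (mx_of 30 A30).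
Proof.
apply: (@base 30 3 8 A30 Ai30 N30 x30); vm_compute; reflexivity.
Qed.

Theorem theorem7 (s : nat) : (1 <= s)%N ->
  (forall n1 : nat, n1 \in [:: 9; 10]%N ->
     exists C : code (4 * s * n1), fsd_lcd_code C (2 * s * n1) 6) /\
  (forall n2 : nat, n2 \in [:: 11; 12; 13]%N ->
     exists C : code (4 * s * n2), fsd_lcd_code C (2 * s * n2) 7) /\
  (forall n3 : nat, n3 \in [:: 14; 15]%N ->
     exists C : code (4 * s * n3), fsd_lcd_code C (2 * s * n3) 8) /\
  (exists C : code (32 * s), fsd_lcd_code C (16 * s) 5).
Proof.
move=> hs.
have E : forall n, (4 * s * n = s * (2 * n) + s * (2 * n))%N /\ (2 * s * n = s * (2 * n))%N.
  move=> n; split; lia.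
split; [|split; [|split]].
- move=> n; rewrite !inE => /orP [] /eqP ->; rewrite (proj1 (E _)) (proj2 (E _)).
  + exact: (family base18).
  + exact: (family base20).
- move=> n; rewrite !inE => /orP [/eqP ->|/orP [] /eqP ->]; rewrite (proj1 (E _)) (proj2 (E _)).
  + exact: (family base22).
  + exact: (family base24).
  + exact: (family base26).
- move=> n; rewrite !inE => /orP [] /eqP ->; rewrite (proj1 (E _)) (proj2 (E _)).
  + exact: (family base28).
  + exact: (family base30).
- have -> : (32 * s = s * 16 + s * 16)%N by lia.
  have -> : (16 * s = s * 16)%N by lia.
  exact: (family base16).
Qed.
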